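(* Let $a$ be a strongly regular scale factor (extended evenly to negative arguments). Then the function \[ g_{\tau\tau}(\tau,\rho)=-\big[1-\dot a(\tau)\,f(\tau,t_0(\tau,\rho))\big]^2 \] is continuous on $D=\{(\tau,\rho):\tau>0,\ 0<\rho<2\rho_{\mathcal M_\tau}\}$.
   Context: A function $a:[0,\infty)\to[0,\infty)$ is a regular scale factor if: (a) $a(0)=0$; (b) $a$ is increasing and continuous on $[0,\infty)$, twice continuously differentiable on $(0,\infty)$, with an inverse function on $[0,\infty)$; (c) $\frac{a(t)\ddot a(t)}{\dot a(t)^2}\le1$ for all $t>0$ (presupposing $\dot a(t)\ne0$). It is strongly regular if also $\frac{a\ddot a}{\dot a^2}\ge-K$ on $(0,\infty)$ for a constant $K\ge1$. Extend $a$ by $a(-t)=a(t)$. For $\tau>0$ let $\rho_{\mathcal M_\tau}=\int_0^\tau\frac{a(t)}{\sqrt{a^2(\tau)-a^2(t)}}dt$. For $(\tau,\rho)\in D$, $t_0(\tau,\rho)$ is the unique $t_0\in(-\tau,\tau)$ with $\rho=\int_{t_0}^\tau\frac{a(t)}{\sqrt{a^2(\tau)-a^2(t)}}dt$. For $0\le t_0<\tau$, \[ f(\tau,t_0)=\int_{t_0}^{\tau}\frac{\ddot a(t)}{\dot a(t)^2}\left(\frac{\sqrt{a^2(\tau)-a^2(t_0)}}{\sqrt{a^2(\tau)-a^2(t)}}-1\right)dt, \] and for $-\tau<t_0<0$, $f(\tau,t_0)=2f(\tau,0)-f(\tau,-t_0)$. *)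

(* Defs.v *)
From Stdlib Require Import Reals ClassicalEpsilon.
From Coquelicot Require Import Coquelicot.
Open Scope R_scope.

Definition aext (a : R -> R) (t : R) : R := a (Rabs t).

Definition regular_scale_factor (a : R -> R) : Prop :=
  a 0 = 0 /\
  (forall t, 0 <= t -> 0 <= a t) /\
  (forall x y, 0 <= x -> x < y -> a x < a y) /\
  (forall x, 0 <= x ->
     filterlim a (within (fun y => 0 <= y) (locally x)) (locally (a x))) /\
  (forall t, 0 < t ->
     ex_derive a t /\ ex_derive (Derive a) t /\ continuous (Derive (Derive a)) t) /\
  (forall y, 0 <= y -> exists x, 0 <= x /\ a x = y) /\
  (forall t, 0 < t ->
     Derive a t <> 0 /\ a t * Derive (Derive a) t / (Derive a t) ^ 2 <= 1).

Definition strongly_regular_scale_factor (a : R -> R) : Prop :=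
  regular_scale_factor a /\
  exists K, 1 <= K /\
    forall t, 0 < t -> - K <= a t * Derive (Derive a) t / (Derive a t) ^ 2.

Definition rho_int (a : R -> R) (tau t0 : R) : R :=
  RInt_gen (fun t => aext a t / sqrt (aext a tau ^ 2 - aext a t ^ 2))
           (at_right t0) (at_left tau).

Definition rho_M (a : R -> R) (tau : R) : R := rho_int a tau 0.

Definition t0_of (a : R -> R) (tau rho : R) : R :=
  epsilon (inhabits 0) (fun s => - tau < s < tau /\ rho = rho_int a tau s).

Definition f_nonneg (a : R -> R) (tau t0 : R) : R :=
  RInt_gen (fun t => Derive (Derive a) t / (Derive a t) ^ 2 *
              (sqrt (a tau ^ 2 - a t0 ^ 2) / sqrt (a tau ^ 2 - a t ^ 2) - 1))
           (at_right t0) (at_left tau).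

Definition f_fun (a : R -> R) (tau t0 : R) : R :=
  if Rle_dec 0 t0 then f_nonneg a tau t0
  else 2 * f_nonneg a tau 0 - f_nonneg a tau (- t0).

Definition g_tautau (a : R -> R) (tau rho : R) : R :=
  - (1 - Derive a tau * f_fun a tau (t0_of a tau rho)) ^ 2.

Definition Dom (a : R -> R) (p : R * R) : Prop :=
  0 < fst p /\ 0 < snd p < 2 * rho_M a (fst p).

(* Main.v *)
Require Import Defs.
From Stdlib Require Import Reals Lra ClassicalEpsilon Classical FunctionalExtensionality.
From Coquelicot Require Import Coquelicot.
Open Scope R_scope.

Lemma ballR (x y e : R) : ball x e y <-> Rabs (y - x) < e.
Proof. reflexivity. Qed.

Ltac rball H := match type of H with ball ?x ?e ?y => change (Rabs (y - x) < e) in H; cbn [pos] in H end.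

Lemma ball_prod {U V : UniformSpace} (x x' : U) (y y' : V) e :
  ball (x, y) e (x', y') <-> ball x e x' /\ ball y e y'.
Proof. reflexivity. Qed.

Section Scale.
Variable a : R -> R.
Hypothesis Ha : strongly_regular_scale_factor a.

Lemma a0 : a 0 = 0.
Proof. destruct Ha as [[H _] _]; exact H. Qed.

Lemma a_incr x y : 0 <= x -> x < y -> a x < a y.
Proof. destruct Ha as [[_ [_ [H _]]] _]; apply H. Qed.

Lemma a_le x y : 0 <= x -> x <= y -> a x <= a y.
Proof. intros Hx Hxy; destruct Hxy as [H|H]. left; apply a_incr; auto. subst; lra. Qed.

Lemma a_pos t : 0 < t -> 0 < a t.
Proof. intros; rewrite <- a0; apply a_incr; lra. Qed.

Lemma a_nonneg t : 0 <= t -> 0 <= a t.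
Proof. intros [H|H]. left; apply a_pos; auto. subst; rewrite a0; lra. Qed.

Lemma a_contw x : 0 <= x ->
  filterlim a (within (fun y => 0 <= y) (locally x)) (locally (a x)).
Proof. destruct Ha as [[_ [_ [_ [H _]]]] _]; apply H. Qed.

Lemma a_der t : 0 < t ->
  ex_derive a t /\ ex_derive (Derive a) t /\ continuous (Derive (Derive a)) t.
Proof. destruct Ha as [[_ [_ [_ [_ [H _]]]]] _]; apply H. Qed.

Lemma a_surj y : 0 <= y -> exists x, 0 <= x /\ a x = y.
Proof. destruct Ha as [[_ [_ [_ [_ [_ [H _]]]]]] _]; apply H. Qed.

Lemma a_q t : 0 < t ->
  Derive a t <> 0 /\ a t * Derive (Derive a) t / (Derive a t) ^ 2 <= 1.
Proof. destruct Ha as [[_ [_ [_ [_ [_ [_ H]]]]]] _]; apply H. Qed.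

Lemma a_K : exists K, 1 <= K /\
    forall t, 0 < t -> - K <= a t * Derive (Derive a) t / (Derive a t) ^ 2.
Proof. destruct Ha as [_ H]; exact H. Qed.

Lemma a_cont t : 0 < t -> continuous a t.
Proof. intros; apply (@ex_derive_continuous R_AbsRing R_NormedModule); apply a_der; auto. Qed.

Lemma da_cont t : 0 < t -> continuous (Derive a) t.
Proof. intros; apply (@ex_derive_continuous R_AbsRing R_NormedModule); apply a_der; auto. Qed.

Lemma dda_cont t : 0 < t -> continuous (Derive (Derive a)) t.
Proof. intros; apply a_der; auto. Qed.

Lemma da_pos t : 0 < t -> 0 < Derive a t.
Proof.
  intros Ht. destruct (a_q t Ht) as [Hn _].
  destruct (Rtotal_order (Derive a t) 0) as [Hl|[He|Hg]]; [|tauto|auto].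
  exfalso. destruct (a_der t Ht) as [Hd _].
  pose proof (Derive_correct _ _ Hd) as Hc. apply is_derive_Reals in Hc.
  destruct (Hc (- Derive a t / 2)) as [d Hdl]. lra.
  set (h := d / 2).
  assert (Hh : 0 < h) by (unfold h; destruct d; simpl; lra).
  assert (Hh2 : h <> 0) by lra.
  assert (Hh3 : Rabs h < d) by (rewrite Rabs_pos_eq by lra; unfold h; destruct d; simpl; lra).
  specialize (Hdl h Hh2 Hh3).
  assert (Hi : a t < a (t + h)) by (apply a_incr; lra).
  apply Rabs_lt_between' in Hdl.
  assert (H1 : (a (t + h) - a t) / h > 0) by (apply Rdiv_lt_0_compat; lra).
  lra.
Qed.

Lemma aext_cont x : continuous (aext a) x.
Proof.
  unfold aext. intros P HP.
  pose proof (a_contw (Rabs x) (Rabs_pos x) P HP) as H.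
  destruct H as [e He].
  exists e. intros y Hy. apply He.
  - apply ballR. apply ballR in Hy.
    eapply Rle_lt_trans; [apply Rabs_triang_inv2|]. auto.
  - apply Rabs_pos.
Qed.

Definition ainv (y : R) : R := epsilon (inhabits 0) (fun x => 0 <= x /\ a x = y).

Lemma ainv_spec y : 0 <= y -> 0 <= ainv y /\ a (ainv y) = y.
Proof.
  intros Hy. unfold ainv. apply epsilon_spec. apply a_surj; auto.
Qed.

Lemma a_inj x y : 0 <= x -> 0 <= y -> a x = a y -> x = y.
Proof.
  intros Hx Hy E. destruct (Rtotal_order x y) as [H|[H|H]]; auto.
  pose proof (a_incr x y Hx H); lra.
  pose proof (a_incr y x Hy H); lra.
Qed.

Lemma ainv_a x : 0 <= x -> ainv (a x) = x.
Proof.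
  intros Hx. destruct (ainv_spec (a x) (a_nonneg x Hx)) as [H1 H2].
  apply a_inj; auto.
Qed.

Lemma ainv_pos y : 0 < y -> 0 < ainv y.
Proof.
  intros Hy. destruct (ainv_spec y (Rlt_le _ _ Hy)) as [[H1|H1] H2]; auto.
  rewrite <- H1 in H2; rewrite a0 in H2; lra.
Qed.

Lemma ainv_le y t : 0 <= y -> 0 <= t -> y <= a t -> ainv y <= t.
Proof.
  intros Hy Ht Hyt. destruct (ainv_spec y Hy) as [H1 H2].
  destruct (Rle_lt_dec (ainv y) t); auto.
  pose proof (a_incr t (ainv y) Ht r); lra.
Qed.

Lemma ainv_lt y t : 0 <= y -> 0 <= t -> a t < y -> t < ainv y.
Proof.
  intros Hy Ht Hyt. destruct (ainv_spec y Hy) as [H1 H2].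
  destruct (Rle_lt_dec (ainv y) t); auto.
  pose proof (a_le (ainv y) t H1 r); lra.
Qed.

Lemma ainv_lt' y t : 0 <= y -> 0 <= t -> y < a t -> ainv y < t.
Proof.
  intros Hy Ht Hyt. destruct (ainv_spec y Hy) as [H1 H2].
  destruct (Rle_lt_dec t (ainv y)); auto.
  pose proof (a_le t (ainv y) Ht r); lra.
Qed.

Lemma ainv_cont y : 0 < y -> continuous ainv y.
Proof.
  intros Hy. apply filterlim_locally. intros eps.
  set (x0 := ainv y).
  assert (Hx0 : 0 < x0) by (apply ainv_pos; auto).
  assert (Hax : a x0 = y) by (apply ainv_spec; lra).
  set (e := Rmin eps (x0 / 2)).
  assert (He : 0 < e) by (unfold e; apply Rmin_pos; [destruct eps; auto| lra]).
  assert (He2 : e <= x0 / 2) by apply Rmin_r.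
  assert (He3 : e <= eps) by apply Rmin_l.
  assert (L : a (x0 - e) < y) by (rewrite <- Hax; apply a_incr; lra).
  assert (U : y < a (x0 + e)) by (rewrite <- Hax; apply a_incr; lra).
  set (d := Rmin (y - a (x0 - e)) (a (x0 + e) - y)).
  assert (Hd : 0 < d) by (unfold d; apply Rmin_pos; lra).
  exists (mkposreal d Hd). intros z Hz. rball Hz.
  apply Rabs_lt_between' in Hz.
  assert (d <= y - a (x0 - e)) by apply Rmin_l.
  assert (d <= a (x0 + e) - y) by apply Rmin_r.
  apply ballR. apply Rabs_lt_between'.
  assert (Ha1 : 0 <= a (x0 - e)) by (apply a_nonneg; lra).
  split.
  - assert (x0 - e < ainv z) by (apply ainv_lt; lra). fold x0; lra.
  - assert (ainv z < x0 + e) by (apply ainv_lt'; lra). fold x0; lra.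
Qed.


Definition hh (t : R) := a t / Derive a t.

Lemma hh_der t : 0 < t -> is_derive hh t
  ((Derive a t * Derive a t - a t * Derive (Derive a) t) / Derive a t ^ 2).
Proof.
  intros Ht. destruct (a_der t Ht) as [H1 [H2 _]].
  apply is_derive_div; try (apply Derive_correct; auto).
  pose proof (da_pos t Ht); lra.
Qed.

Lemma hh_cont t : 0 < t -> continuous hh t.
Proof.
  intros Ht. apply (@ex_derive_continuous R_AbsRing R_NormedModule).
  eexists; apply hh_der; auto.
Qed.

Lemma hh_pos t : 0 < t -> 0 < hh t.
Proof. intros; unfold hh; apply Rdiv_lt_0_compat; [apply a_pos|apply da_pos]; auto. Qed.

Lemma hh_mono x y : 0 < x -> x <= y -> hh x <= hh y.
Proof.
  intros Hx Hxy. destruct Hxy as [Hxy|Hxy]; [|subst; lra].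
  destruct (MVT_gen hh x y (fun t => (Derive a t * Derive a t - a t * Derive (Derive a) t) / Derive a t ^ 2)) as [c [Hc Hc2]].
  - intros z Hz. rewrite Rmin_left in Hz by lra. rewrite Rmax_right in Hz by lra.
    apply hh_der; lra.
  - intros z Hz. rewrite Rmin_left in Hz by lra. rewrite Rmax_right in Hz by lra.
    apply continuity_pt_filterlim. apply hh_cont; lra.
  - rewrite Rmin_left in Hc by lra. rewrite Rmax_right in Hc by lra.
    assert (Hc0 : 0 < c) by lra.
    destruct (a_q c Hc0) as [_ Hq].
    pose proof (da_pos c Hc0) as Hd.
    assert (E : (Derive a c * Derive a c - a c * Derive (Derive a) c) / Derive a c ^ 2
               = 1 - a c * Derive (Derive a) c / Derive a c ^ 2) by (field; lra).
    rewrite E in Hc2.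
    assert (0 <= (1 - a c * Derive (Derive a) c / Derive a c ^ 2) * (y - x)).
    { apply Rmult_le_pos; lra. }
    lra.
Qed.

End Scale.

Lemma asin_der u : -1 < u < 1 -> is_derive asin u (1 / sqrt (1 - u ^ 2)).
Proof.
  intros Hu. apply is_derive_Reals.
  apply (derive_pt_eq_1 _ _ _ (derivable_pt_asin u Hu)).
  rewrite derive_pt_asin. rewrite Rsqr_pow2. reflexivity.
Qed.

Lemma asin_cont u : -1 < u < 1 -> continuous asin u.
Proof.
  intros Hu. apply (@ex_derive_continuous R_AbsRing R_NormedModule).
  eexists; apply asin_der; auto.
Qed.

Lemma asin_lt u v : -1 <= u -> u < v -> v <= 1 -> asin u < asin v.
Proof.
  intros H1 H2 H3. destruct (Rlt_le_dec (asin u) (asin v)) as [H|H]; auto.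
  pose proof (asin_bound u); pose proof (asin_bound v).
  assert (Hs : sin (asin v) <= sin (asin u)) by (apply sin_incr_1; lra).
  rewrite !sin_asin in Hs by lra. lra.
Qed.

Lemma asin_le u v : -1 <= u -> u <= v -> v <= 1 -> asin u <= asin v.
Proof. intros H1 [H2|H2] H3. left; apply asin_lt; auto. subst; lra. Qed.

Lemma sin_asin_le u phi : -1 <= u <= 1 -> asin u <= phi <= PI/2 -> u <= sin phi.
Proof.
  intros Hu Hp. pose proof (asin_bound u).
  rewrite <- (sin_asin u) at 1 by lra. apply sin_incr_1; lra.
Qed.

Lemma asin_near1 eps : 0 < eps -> exists d, 0 < d /\
  forall u, 1 - d < u <= 1 -> PI/2 - asin u < eps.
Proof.
  intros He. set (e := Rmin eps (PI/2)).
  assert (0 < e) by (unfold e; apply Rmin_pos; [lra| apply PI2_RGT_0]).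
  assert (e <= eps) by apply Rmin_l. assert (e <= PI/2) by apply Rmin_r.
  assert (Hs : sin (PI/2 - e) < 1).
  { pose proof (sin_increasing_1 (PI/2 - e) (PI/2)) as Hsi. rewrite sin_PI2 in Hsi. apply Hsi; lra. }
  exists (1 - sin (PI/2 - e)). split; [lra|].
  intros u Hu. destruct (Rlt_le_dec (PI/2 - asin u) eps); auto.
  exfalso. pose proof (asin_bound u). pose proof PI_RGT_0. pose proof (SIN_bound (PI/2 - e)).
  assert (u <= sin (PI/2 - e)).
  { rewrite <- (sin_asin u) by lra. apply sin_incr_1; lra. }
  lra.
Qed.


Lemma unif_cont {X : UniformSpace} (x0 : X) (G : X -> R -> R) c d :
  (forall p, c <= p <= d -> continuous (fun z : X * R => G (fst z) (snd z)) (x0, p)) ->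
  forall eps, 0 < eps ->
  locally x0 (fun x => forall p, c <= p <= d -> Rabs (G x p - G x0 p) < eps).
Proof.
  intros Hc eps He.
  assert (Hd : forall p, exists dl : posreal, c <= p <= d ->
     forall x q, ball x0 dl x -> ball p dl q -> Rabs (G x q - G x0 p) < eps/2).
  { intro p. destruct (classic (c <= p <= d)) as [H|H].
    - specialize (Hc p H).
      assert (He2 : 0 < eps / 2) by lra.
      destruct (proj1 (filterlim_locally _ _) Hc (mkposreal _ He2)) as [dl Hdl].
      exists dl. intros _ x q H1 H2. apply (Hdl (x, q)). split; auto.
    - exists (mkposreal 1 Rlt_0_1). tauto. }
  set (df := fun p => proj1_sig (constructive_indefinite_description _ (Hd p))).
  assert (Hdf : forall p, c <= p <= d ->
     forall x q, ball x0 (df p) x -> ball p (df p) q -> Rabs (G x q - G x0 p) < eps/2).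
  { intro p. exact (proj2_sig (constructive_indefinite_description _ (Hd p))). }
  destruct (compactness_value_1d c d df) as [d0 Hd0].
  exists d0. intros x Hx p Hp. specialize (Hd0 p Hp).
  destruct (Rlt_le_dec (Rabs (G x p - G x0 p)) eps) as [H|H]; auto.
  exfalso. apply Hd0. intros [t [Ht [H1 H2]]].
  assert (A1 : Rabs (G x p - G x0 t) < eps / 2).
  { apply Hdf; auto. eapply ball_le; [exact H2|exact Hx]. }
  assert (A2 : Rabs (G x0 p - G x0 t) < eps / 2).
  { apply Hdf; auto. apply ball_center. }
  assert (Rabs (G x p - G x0 p) < eps).
  { replace (G x p - G x0 p) with ((G x p - G x0 t) - (G x0 p - G x0 t)) by ring.
    eapply Rle_lt_trans; [apply Rabs_triang|]. rewrite Rabs_Ropp. lra. }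
  lra.
Qed.

Lemma RInt_abs_bound (G : R -> R) u v M :
  (forall x, Rmin u v <= x <= Rmax u v -> continuous G x) ->
  (forall x, Rmin u v <= x <= Rmax u v -> Rabs (G x) <= M) ->
  Rabs (RInt G u v) <= M * Rabs (v - u).
Proof.
  intros Hc Hb. destruct (Rle_lt_dec u v) as [H|H].
  - rewrite Rmin_left, Rmax_right in * by lra.
    rewrite (Rabs_pos_eq (v - u)) by lra. rewrite Rmult_comm.
    apply abs_RInt_le_const; auto. apply (@ex_RInt_continuous R_CompleteNormedModule).
    rewrite Rmin_left, Rmax_right by lra; auto.
  - rewrite Rmin_right, Rmax_left in * by lra.
    rewrite <- opp_RInt_swap.
    2:{ apply (@ex_RInt_continuous R_CompleteNormedModule). rewrite Rmin_left, Rmax_right by lra; auto. }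
    change (Rabs (- RInt G v u) <= M * Rabs (v - u)).
    rewrite Rabs_Ropp. rewrite (Rabs_left (v - u)) by lra.
    replace (- (v - u)) with (u - v) by ring. rewrite Rmult_comm.
    apply abs_RInt_le_const; try lra; auto. apply (@ex_RInt_continuous R_CompleteNormedModule).
    rewrite Rmin_left, Rmax_right by lra; auto.
Qed.

Lemma engine {X : UniformSpace} (x0 : X) (N : X -> Prop) (al : X -> R)
  (G : X -> R -> R) (I : X -> R) (M : R) :
  locally x0 N ->
  (forall x, N x -> 0 <= al x < PI/2) ->
  continuous al x0 ->
  (forall p, al x0 < p <= PI/2 -> continuous (fun z : X * R => G (fst z) (snd z)) (x0, p)) ->
  (forall x p, N x -> al x < p <= PI/2 -> continuous (G x) p) ->
  (forall x u, N x -> al x < u <= PI/2 -> Rabs (I x - RInt (G x) u (PI/2)) <= M * (u - al x)) ->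
  continuous I x0.
Proof.
  intros HN Hal Halc HGj HGc HI.
  apply filterlim_locally. intros [eps He]. simpl.
  pose proof PI_RGT_0 as Hpi. pose proof PI_4 as Hpi4.
  assert (Hx0 := Hal x0 (locally_singleton _ _ HN)).
  set (M' := Rabs M + 1).
  assert (HM' : 0 < M') by (unfold M'; pose proof (Rabs_pos M); lra).
  assert (HMM : M <= M') by (unfold M'; pose proof (Rle_abs M); lra).
  set (eta := Rmin ((PI/2 - al x0)/2) (eps/(8*M'))).
  assert (Heta : 0 < eta).
  { unfold eta; apply Rmin_pos; [lra|]. apply Rdiv_lt_0_compat; lra. }
  assert (Heta1 : eta <= (PI/2 - al x0)/2) by apply Rmin_l.
  assert (Heta2 : eta <= eps/(8*M')) by apply Rmin_r.
  assert (Heta3 : M' * eta <= eps / 8).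
  { apply (Rmult_le_compat_l M') in Heta2; [|lra].
    replace (M' * (eps / (8 * M'))) with (eps/8) in Heta2 by (field; lra). lra. }
  set (u := al x0 + eta).
  assert (He8 : 0 < eps / 8) by lra.
  assert (HU := unif_cont x0 G u (PI/2) ltac:(intros p Hp; apply HGj; unfold u in *; lra) (eps/8) He8).
  assert (HA : locally x0 (fun x => ball (al x0) (mkposreal eta Heta) (al x))).
  { apply (proj1 (filterlim_locally _ _) Halc). }
  generalize (filter_and _ _ HN (filter_and _ _ HA HU)).
  apply filter_imp. intros x [Nx [Ax Ux]].
  rball Ax. apply Rabs_lt_between' in Ax.
  apply ballR.
  assert (Hu1 : al x < u <= PI/2) by (unfold u; lra).
  assert (Hu0 : al x0 < u <= PI/2) by (unfold u; lra).
  specialize (HI x u Nx Hu1) as I1.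
  specialize (HI x0 u (locally_singleton _ _ HN) Hu0) as I2.
  assert (Ex : ex_RInt (G x) u (PI/2)).
  { apply (@ex_RInt_continuous R_CompleteNormedModule). rewrite Rmin_left, Rmax_right by lra. intros z Hz; apply HGc; auto; lra. }
  assert (Ex0 : ex_RInt (G x0) u (PI/2)).
  { apply (@ex_RInt_continuous R_CompleteNormedModule). rewrite Rmin_left, Rmax_right by lra. intros z Hz; apply HGc; auto.
    apply locally_singleton; auto. lra. }
  assert (I3 : Rabs (RInt (G x) u (PI/2) - RInt (G x0) u (PI/2)) <= (PI/2 - u) * (eps/8)).
  { pose proof (RInt_minus (G x) (G x0) u (PI/2) Ex Ex0) as E.
    change (RInt (fun y => G x y - G x0 y) u (PI/2) = RInt (G x) u (PI/2) - RInt (G x0) u (PI/2)) in E.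
    rewrite <- E. apply abs_RInt_le_const; [lra| |].
    - apply (ex_RInt_minus (V := R_NormedModule)); auto.
    - intros t Ht; left; apply Ux; lra. }
  assert (B1 : M * (u - al x) <= M' * (2 * eta)).
  { apply Rle_trans with (M' * (u - al x)).
    apply Rmult_le_compat_r; lra. apply Rmult_le_compat_l; unfold u; lra. }
  assert (B2 : M * (u - al x0) <= M' * eta).
  { unfold u. replace (al x0 + eta - al x0) with eta by ring. apply Rmult_le_compat_r; lra. }
  assert (B3 : (PI/2 - u) * (eps/8) <= 2 * (eps/8)).
  { apply Rmult_le_compat_r; unfold u; lra. }
  replace (I x - I x0) with ((I x - RInt (G x) u (PI/2)) + (RInt (G x) u (PI/2) - RInt (G x0) u (PI/2))
     - (I x0 - RInt (G x0) u (PI/2))) by ring.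
  eapply Rle_lt_trans; [apply Rabs_triang|]. rewrite Rabs_Ropp.
  eapply Rle_lt_trans; [apply Rplus_le_compat_r; apply Rabs_triang|].
  lra.
Qed.

Section ContR.
Context {U : UniformSpace}.
Lemma cont_plus (f g : U -> R) x : continuous f x -> continuous g x -> continuous (fun y => f y + g y) x.
Proof. intros; apply (@continuous_plus U R_AbsRing R_NormedModule f g x); auto. Qed.
Lemma cont_opp (f : U -> R) x : continuous f x -> continuous (fun y => - f y) x.
Proof. intros; apply (@continuous_opp U R_AbsRing R_NormedModule f x); auto. Qed.
Lemma cont_minus (f g : U -> R) x : continuous f x -> continuous g x -> continuous (fun y => f y - g y) x.
Proof. intros; apply cont_plus; auto; apply cont_opp; auto. Qed.
Lemma cont_mult (f g : U -> R) x : continuous f x -> continuous g x -> continuous (fun y => f y * g y) x.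
Proof. intros; apply (@continuous_mult U R_AbsRing f g x); auto. Qed.
Lemma cont_comp1 (f : U -> R) (h : R -> R) x : continuous f x -> continuous h (f x) -> continuous (fun y => h (f y)) x.
Proof. intros; apply (continuous_comp f h); auto. Qed.
Lemma cont_inv (f : U -> R) x : continuous f x -> f x <> 0 -> continuous (fun y => / f y) x.
Proof. intros; apply cont_comp1; auto. apply continuous_Rinv; auto. Qed.
Lemma cont_div (f g : U -> R) x : continuous f x -> continuous g x -> g x <> 0 -> continuous (fun y => f y / g y) x.
Proof. intros; apply cont_mult; auto; apply cont_inv; auto. Qed.
Lemma cont_pow (f : U -> R) n x : continuous f x -> continuous (fun y => f y ^ n) x.
Proof. intros H; induction n; simpl. apply continuous_const. apply cont_mult; auto. Qed.
Lemma cont_const (c : R) x : continuous (fun _ : U => c) x.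
Proof. apply continuous_const. Qed.
End ContR.

Lemma cont_fst {U V : UniformSpace} (f : U -> R) (x : U) (y : V) :
  continuous f x -> continuous (fun z : U * V => f (fst z)) (x, y).
Proof. intros; apply (continuous_comp fst f); auto. apply continuous_fst. Qed.
Lemma cont_snd {U V : UniformSpace} (f : V -> R) (x : U) (y : V) :
  continuous f y -> continuous (fun z : U * V => f (snd z)) (x, y).
Proof. intros; apply (continuous_comp snd f); auto. apply continuous_snd. Qed.

Lemma RInt_near (g : R -> R) s :
  (exists r, 0 < r /\ forall t, Rabs (t - s) < r -> continuous g t) ->
  forall eps, 0 < eps -> exists dl, 0 < dl /\ forall x, Rabs (x - s) < dl -> Rabs (RInt g s x) < eps.
Proof.
  intros [r [Hr Hc]] eps He.
  assert (Hcs := Hc s ltac:(rewrite Rminus_eq_0, Rabs_R0; lra)).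
  destruct (proj1 (filterlim_locally _ _) Hcs (mkposreal 1 Rlt_0_1)) as [r1 Hr1].
  set (B := Rabs (g s) + 1).
  assert (HB : 0 < B) by (unfold B; pose proof (Rabs_pos (g s)); lra).
  set (dl := Rmin (Rmin r r1) (eps / (B + 1))).
  assert (Hdl : 0 < dl) by (unfold dl; repeat apply Rmin_pos; try lra; destruct r1; simpl; auto; apply Rdiv_lt_0_compat; lra).
  assert (H1 : dl <= Rmin r r1) by apply Rmin_l. assert (H2 : dl <= eps / (B + 1)) by apply Rmin_r.
  assert (H3 : Rmin r r1 <= r) by apply Rmin_l. assert (H4 : Rmin r r1 <= r1) by apply Rmin_r.
  exists dl. split; auto. intros x Hx.
  assert (Hin : forall z, Rmin s x <= z <= Rmax s x -> Rabs (z - s) < dl).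
  { intros z Hz. apply Rabs_lt_between'. apply Rabs_lt_between' in Hx.
    destruct (Rle_lt_dec s x). rewrite Rmin_left, Rmax_right in Hz by lra; lra.
    rewrite Rmin_right, Rmax_left in Hz by lra; lra. }
  eapply Rle_lt_trans. apply (RInt_abs_bound g s x B).
  - intros z Hz. apply Hc. pose proof (Hin z Hz). lra.
  - intros z Hz. pose proof (Hin z Hz). specialize (Hr1 z). 
    assert (Hb : ball s r1 z) by (apply ballR; lra).
    specialize (Hr1 Hb). rball Hr1.
    unfold B. pose proof (Rabs_triang_inv (g z) (g s)). lra.
  - apply Rle_lt_trans with (B * dl). apply Rmult_le_compat_l; lra.
    apply Rle_lt_trans with (B * (eps / (B + 1))). apply Rmult_le_compat_l; lra.
    apply (Rmult_lt_reg_r (B + 1)); [lra|]. replace (B * (eps / (B + 1)) * (B + 1)) with (B * eps) by (field; lra). nra.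
Qed.

Lemma cont_partial {X : UniformSpace} (G : X -> R -> R) x p :
  continuous (fun z : X * R => G (fst z) (snd z)) (x, p) -> continuous (G x) p.
Proof.
  intros H. apply (continuous_comp (fun q : R => (x, q)) (fun z : X * R => G (fst z) (snd z)) p); auto.
  apply (continuous_comp_2 (fun _ : R => x) (fun q => q) (fun u v => (u, v))).
  apply continuous_const. apply continuous_id.
  intros P [e He]. exists e. intros y Hy. apply He. exact Hy.
Qed.

Lemma PPI {X : UniformSpace} (x0 : X) (G : X -> R -> R) (be : X -> R) c d c0 :
  c < be x0 < d -> c <= c0 <= d ->
  (forall p, c <= p <= d -> continuous (fun z : X * R => G (fst z) (snd z)) (x0, p)) ->
  locally x0 (fun x => forall p, c <= p <= d -> continuous (G x) p) ->
  continuous be x0 ->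
  continuous (fun x => RInt (G x) (be x) c0) x0.
Proof.
  intros Hb Hc0 HGj HGl Hbe.
  apply filterlim_locally. intros [eps He]. simpl.
  assert (Hcx0 : continuous (G x0) (be x0)) by (apply cont_partial; apply HGj; lra).
  destruct (proj1 (filterlim_locally _ _) Hcx0 (mkposreal 1 Rlt_0_1)) as [r Hr].
  set (B := Rabs (G x0 (be x0)) + 2).
  assert (HB : 0 < B) by (unfold B; pose proof (Rabs_pos (G x0 (be x0))); lra).
  set (D := Rabs (c0 - be x0) + 1).
  assert (HD : 0 < D) by (unfold D; pose proof (Rabs_pos (c0 - be x0)); lra).
  set (e1 := Rmin 1 (eps / (2 * D))).
  assert (He1 : 0 < e1) by (unfold e1; apply Rmin_pos; [lra|apply Rdiv_lt_0_compat; lra]).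
  assert (He1a : e1 <= 1) by apply Rmin_l. assert (He1b : e1 <= eps / (2 * D)) by apply Rmin_r.
  set (e2 := Rmin (Rmin r (eps / (2 * B))) (Rmin (be x0 - c) (d - be x0))).
  assert (He2 : 0 < e2).
  { unfold e2. apply Rmin_pos; apply Rmin_pos; try lra. destruct r; auto. apply Rdiv_lt_0_compat; lra. }
  assert (He2a : e2 <= Rmin r (eps / (2 * B))) by apply Rmin_l.
  assert (He2b : e2 <= Rmin (be x0 - c) (d - be x0)) by apply Rmin_r.
  assert (Rmin r (eps / (2 * B)) <= r) by apply Rmin_l.
  assert (Rmin r (eps / (2 * B)) <= eps / (2 * B)) by apply Rmin_r.
  assert (Rmin (be x0 - c) (d - be x0) <= be x0 - c) by apply Rmin_l.
  assert (Rmin (be x0 - c) (d - be x0) <= d - be x0) by apply Rmin_r.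
  assert (HU := unif_cont x0 G c d HGj e1 He1).
  assert (HA : locally x0 (fun x => ball (be x0) (mkposreal e2 He2) (be x))) by
    apply (proj1 (filterlim_locally _ _) Hbe).
  generalize (filter_and _ _ HGl (filter_and _ _ HU HA)). apply filter_imp.
  intros x [Hl [Hu Ha]]. rball Ha.
  apply ballR. apply Rabs_lt_between' in Ha.
  assert (Ex : forall u v, c <= u <= d -> c <= v <= d -> ex_RInt (G x) u v).
  { intros u v Hu' Hv'. apply (@ex_RInt_continuous R_CompleteNormedModule). intros z Hz. apply Hl.
    destruct (Rle_lt_dec u v). rewrite Rmin_left, Rmax_right in Hz by lra; lra.
    rewrite Rmin_right, Rmax_left in Hz by lra; lra. }
  assert (Ex0 : forall u v, c <= u <= d -> c <= v <= d -> ex_RInt (G x0) u v).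
  { intros u v Hu' Hv'. apply (@ex_RInt_continuous R_CompleteNormedModule). intros z Hz. apply cont_partial. apply HGj.
    destruct (Rle_lt_dec u v). rewrite Rmin_left, Rmax_right in Hz by lra; lra.
    rewrite Rmin_right, Rmax_left in Hz by lra; lra. }
  rewrite <- (RInt_Chasles (G x) (be x) (be x0) c0) by (apply Ex; lra).
  change (Rabs (RInt (G x) (be x) (be x0) + RInt (G x) (be x0) c0 - RInt (G x0) (be x0) c0) < eps).
  assert (T1 : Rabs (RInt (G x) (be x) (be x0)) <= B * Rabs (be x0 - be x)).
  { apply RInt_abs_bound.
    - intros z Hz. apply Hl. destruct (Rle_lt_dec (be x) (be x0)).
      rewrite Rmin_left, Rmax_right in Hz by lra; lra.
      rewrite Rmin_right, Rmax_left in Hz by lra; lra.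
    - intros z Hz.
      assert (Hz' : c <= z <= d /\ Rabs (z - be x0) < r).
      { destruct (Rle_lt_dec (be x) (be x0)).
        rewrite Rmin_left, Rmax_right in Hz by lra. split. lra. apply Rabs_lt_between'; lra.
        rewrite Rmin_right, Rmax_left in Hz by lra. split. lra. apply Rabs_lt_between'; lra. }
      destruct Hz' as [Hz1 Hz2].
      assert (Hb1 : ball (be x0) r z) by (apply ballR; auto).
      specialize (Hr z Hb1). rball Hr.
      specialize (Hu z Hz1). unfold B.
      pose proof (Rabs_triang_inv (G x z) (G x0 z)). pose proof (Rabs_triang_inv (G x0 z) (G x0 (be x0))).
      lra. }
  assert (T2 : Rabs (RInt (G x) (be x0) c0 - RInt (G x0) (be x0) c0) <= e1 * Rabs (c0 - be x0)).
  { pose proof (RInt_minus (G x) (G x0) (be x0) c0 (Ex (be x0) c0 ltac:(lra) ltac:(lra)) (Ex0 (be x0) c0 ltac:(lra) ltac:(lra))) as E.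
    change (RInt (fun y => G x y - G x0 y) (be x0) c0 = RInt (G x) (be x0) c0 - RInt (G x0) (be x0) c0) in E.
    rewrite <- E. apply RInt_abs_bound.
    - intros z Hz. assert (c <= z <= d).
      { destruct (Rle_lt_dec (be x0) c0). rewrite Rmin_left, Rmax_right in Hz by lra; lra.
        rewrite Rmin_right, Rmax_left in Hz by lra; lra. }
      apply cont_minus. apply Hl; auto. apply cont_partial; apply HGj; auto.
    - intros z Hz. left. apply Hu.
      destruct (Rle_lt_dec (be x0) c0). rewrite Rmin_left, Rmax_right in Hz by lra; lra.
      rewrite Rmin_right, Rmax_left in Hz by lra; lra. }
  assert (T3 : B * Rabs (be x0 - be x) < eps / 2).
  { apply Rlt_le_trans with (B * e2). apply Rmult_lt_compat_l. lra.
    apply Rabs_lt_between'. lra.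
    apply Rle_trans with (B * (eps / (2 * B))). apply Rmult_le_compat_l; lra.
    replace (B * (eps / (2 * B))) with (eps / 2) by (field; lra). lra. }
  assert (T4 : e1 * Rabs (c0 - be x0) < eps / 2).
  { apply Rle_lt_trans with (eps / (2 * D) * Rabs (c0 - be x0)).
    apply Rmult_le_compat_r. apply Rabs_pos. auto.
    apply (Rmult_lt_reg_r (2 * D)); [lra|].
    replace (eps / (2 * D) * Rabs (c0 - be x0) * (2 * D)) with (eps * Rabs (c0 - be x0)) by (field; lra).
    unfold D. nra. }
  replace (RInt (G x) (be x) (be x0) + RInt (G x) (be x0) c0 - RInt (G x0) (be x0) c0) with
    (RInt (G x) (be x) (be x0) + (RInt (G x) (be x0) c0 - RInt (G x0) (be x0) c0)) by ring.
  eapply Rle_lt_trans; [apply Rabs_triang|]. lra.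
Qed.

Lemma ev_right s d (P : R -> Prop) : 0 < d -> (forall x, s < x < s + d -> P x) -> at_right s P.
Proof.
  intros Hd HP. exists (mkposreal d Hd). intros y Hy Hsy. rball Hy.
  apply Rabs_lt_between' in Hy. apply HP; lra.
Qed.

Lemma ev_left s d (P : R -> Prop) : 0 < d -> (forall x, s - d < x < s -> P x) -> at_left s P.
Proof.
  intros Hd HP. exists (mkposreal d Hd). intros y Hy Hsy. rball Hy.
  apply Rabs_lt_between' in Hy. apply HP; lra.
Qed.

Lemma sqrt_ratio A y : 0 < A -> 0 <= y <= A -> sqrt (1 - (y / A) ^ 2) = sqrt (A ^ 2 - y ^ 2) / A.
Proof.
  intros HA Hy. replace (1 - (y / A) ^ 2) with ((A ^ 2 - y ^ 2) / A ^ 2) by (field; lra).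
  rewrite sqrt_div_alt by (apply pow_lt; lra). rewrite sqrt_pow2 by lra. reflexivity.
Qed.

Section Transfer.
Variable a : R -> R.
Hypothesis Ha : strongly_regular_scale_factor a.

Definition Phi (tau t : R) := asin (a t / a tau).
Definition dPhi (tau t : R) := Derive a t / sqrt (a tau ^ 2 - a t ^ 2).

Variable tau : R.
Hypothesis Htau : 0 < tau.

Lemma ratio_bnd t : 0 <= t <= tau -> 0 <= a t / a tau <= 1.
Proof.
  intros Ht. pose proof (a_pos a Ha tau Htau). pose proof (a_nonneg a Ha t (proj1 Ht)).
  pose proof (a_le a Ha t tau (proj1 Ht) (proj2 Ht)).
  split. apply Rdiv_le_0_compat; lra.
  apply (Rmult_le_reg_r (a tau)); [lra|]; unfold Rdiv; rewrite Rmult_assoc, Rinv_l by lra; lra.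
Qed.

Lemma ratio_lt t : 0 <= t < tau -> a t / a tau < 1.
Proof.
  intros Ht. pose proof (a_pos a Ha tau Htau).
  pose proof (a_incr a Ha t tau (proj1 Ht) (proj2 Ht)).
  apply (Rmult_lt_reg_r (a tau)); [lra|]; unfold Rdiv; rewrite Rmult_assoc, Rinv_l by lra; lra.
Qed.

Lemma Phi_lt x y : 0 <= x -> x < y -> y <= tau -> Phi tau x < Phi tau y.
Proof.
  intros Hx Hxy Hy. unfold Phi. apply asin_lt.
  - pose proof (ratio_bnd x); lra.
  - pose proof (a_pos a Ha tau Htau). apply Rmult_lt_compat_r. apply Rinv_0_lt_compat; auto.
    apply a_incr; auto.
  - pose proof (ratio_bnd y); lra.
Qed.

Lemma Phi_le x y : 0 <= x -> x <= y -> y <= tau -> Phi tau x <= Phi tau y.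
Proof. intros Hx [H|H] Hy. left; apply Phi_lt; auto. subst; lra. Qed.

Lemma Phi_tau : Phi tau tau = PI / 2.
Proof.
  unfold Phi. pose proof (a_pos a Ha tau Htau).
  replace (a tau / a tau) with 1 by (field; lra). apply asin_1.
Qed.

Lemma Phi_bnd t : 0 <= t -> Phi tau t <= PI/2.
Proof. intros; unfold Phi; apply asin_bound. Qed.

Lemma Phi_nonneg t : 0 <= t <= tau -> 0 <= Phi tau t.
Proof.
  intros Ht. unfold Phi. rewrite <- asin_0. apply asin_le; pose proof (ratio_bnd t Ht); lra.
Qed.

Lemma Phi_der t : 0 < t < tau -> is_derive (Phi tau) t (dPhi tau t).
Proof.
  intros Ht. pose proof (a_pos a Ha tau Htau) as HA.
  pose proof (a_pos a Ha t (proj1 Ht)) as Hat.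
  assert (Hr : 0 <= a t / a tau < 1) by (split; [apply ratio_bnd| apply ratio_lt]; lra).
  assert (Hd : is_derive (fun t => a t / a tau) t (Derive a t / a tau)).
  { apply (is_derive_ext (fun t => / a tau * a t)). intro x; unfold Rdiv; apply Rmult_comm.
    replace (Derive a t / a tau) with (/ a tau * Derive a t) by (unfold Rdiv; ring).
    apply is_derive_scal. apply Derive_correct. apply (a_der a Ha t); lra. }
  pose proof (is_derive_comp asin (fun t => a t / a tau) t _ _ (asin_der (a t / a tau) ltac:(lra)) Hd) as Hc.
  unfold Phi.
  assert (E : scal (Derive a t / a tau) (1 / sqrt (1 - (a t / a tau) ^ 2)) = dPhi tau t).
  { change (Derive a t / a tau * (1 / sqrt (1 - (a t / a tau) ^ 2)) = dPhi tau t).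
    rewrite sqrt_ratio by (pose proof (a_le a Ha t tau ltac:(lra) ltac:(lra)); lra).
    unfold dPhi.
    assert (0 < sqrt (a tau ^ 2 - a t ^ 2)).
    { apply sqrt_lt_R0. pose proof (a_incr a Ha t tau ltac:(lra) ltac:(lra)). nra. }
    field; lra. }
  rewrite <- E. exact Hc.
Qed.

Lemma dPhi_cont t : 0 < t < tau -> continuous (dPhi tau) t.
Proof.
  intros Ht. unfold dPhi. apply cont_div.
  - apply (da_cont a Ha); lra.
  - apply (cont_comp1 (fun x => a tau ^ 2 - a x ^ 2) sqrt). apply cont_minus. apply cont_const.
    apply cont_pow. apply (a_cont a Ha); lra. apply continuous_sqrt.
  - pose proof (a_pos a Ha t (proj1 Ht)). pose proof (a_incr a Ha t tau ltac:(lra) ltac:(lra)).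
    apply Rgt_not_eq. apply sqrt_lt_R0. nra.
Qed.

Lemma Phi_rcont s : 0 <= s < tau -> forall eps, 0 < eps ->
  exists d, 0 < d /\ forall x, s <= x < s + d -> Phi tau x - Phi tau s < eps.
Proof.
  intros Hs eps He. pose proof (a_pos a Ha tau Htau) as HA.
  assert (Hr : 0 <= a s / a tau < 1) by (split; [apply ratio_bnd| apply ratio_lt]; lra).
  pose proof (asin_cont (a s / a tau) ltac:(lra)) as Hc.
  destruct (proj1 (filterlim_locally _ _) Hc (mkposreal eps He)) as [d1 Hd1].
  assert (Hd1A : 0 < d1 * a tau) by (destruct d1; simpl; nra).
  destruct (a_contw a Ha s (proj1 Hs) _ (locally_ball (a s) (mkposreal _ Hd1A))) as [d2 Hd2].
  exists d2. split. destruct d2; auto.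
  intros x Hx. specialize (Hd2 x). 
  assert (Hb : ball (a s) (d1 * a tau) (a x)).
  { apply Hd2. apply ballR. rewrite Rabs_pos_eq by lra. lra. lra. }
  rball Hb.
  assert (Hb2 : ball (a s / a tau) d1 (a x / a tau)).
  { apply ballR. replace (a x / a tau - a s / a tau) with ((a x - a s) / a tau) by (field; lra).
    unfold Rdiv. rewrite Rabs_mult, Rabs_inv, (Rabs_pos_eq (a tau)) by lra.
    apply (Rmult_lt_reg_r (a tau)); auto. rewrite Rmult_assoc, Rinv_l by lra. rewrite Rmult_1_r. exact Hb. }
  specialize (Hd1 _ Hb2). apply ballR in Hd1. unfold Phi. simpl in Hd1.
  apply Rabs_lt_between' in Hd1. lra.
Qed.

Lemma Phi_lcont eps : 0 < eps ->
  exists d, 0 < d /\ forall y, tau - d < y <= tau -> PI/2 - Phi tau y < eps.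
Proof.
  intros He. pose proof (a_pos a Ha tau Htau) as HA.
  destruct (asin_near1 eps He) as [d1 [Hd1 Hd1']].
  assert (Hd1A : 0 < d1 * a tau) by nra.
  destruct (proj1 (filterlim_locally _ _) (a_cont a Ha tau Htau) (mkposreal _ Hd1A)) as [d2 Hd2].
  exists (Rmin d2 tau). split. apply Rmin_pos; auto. destruct d2; auto.
  intros y Hy. assert (Rmin d2 tau <= d2) by apply Rmin_l. assert (Rmin d2 tau <= tau) by apply Rmin_r.
  assert (Hb : ball tau d2 y) by (apply ballR; rewrite Rabs_left1 by lra; lra).
  specialize (Hd2 y Hb). rball Hd2. apply Rabs_lt_between' in Hd2.
  unfold Phi. apply Hd1'. split.
  - apply (Rmult_lt_reg_r (a tau)); auto. unfold Rdiv; rewrite Rmult_assoc, Rinv_l by lra. nra.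
  - apply ratio_bnd; lra.
Qed.

Variable s : R.
Hypothesis Hs : 0 <= s < tau.

Lemma transfer (g G : R -> R) (M : R) :
  (forall t, 0 < t < tau -> g t = dPhi tau t * G (Phi tau t)) ->
  (forall p, Phi tau s < p <= PI/2 -> continuous G p) ->
  (forall p, Phi tau s < p <= PI/2 -> Rabs (G p) <= M) ->
  exists l, is_RInt_gen g (at_right s) (at_left tau) l /\
    forall u, Phi tau s < u <= PI/2 -> Rabs (l - RInt G u (PI/2)) <= M * (u - Phi tau s).
Proof.
  intros Hg HGc HGb.
  pose proof PI_RGT_0 as Hpi.
  assert (HsP : Phi tau s < PI/2) by (rewrite <- Phi_tau; apply Phi_lt; lra).
  assert (HM : 0 <= M) by (eapply Rle_trans; [apply Rabs_pos| apply (HGb (PI/2)); lra]).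
  set (Rg := fun p => Phi tau s < p <= PI/2).
  assert (Hex : forall u v, Rg u -> Rg v -> ex_RInt G u v).
  { intros u v Hu Hv. apply (@ex_RInt_continuous R_CompleteNormedModule). intros z Hz.
    apply HGc. unfold Rg in *. destruct (Rle_lt_dec u v).
    rewrite Rmin_left, Rmax_right in Hz by lra; lra.
    rewrite Rmin_right, Rmax_left in Hz by lra; lra. }
  assert (Hbd : forall u v, Rg u -> Rg v -> Rabs (RInt G u v) <= M * Rabs (v - u)).
  { intros u v Hu Hv. apply RInt_abs_bound; intros z Hz; [apply HGc|apply HGb]; unfold Rg in *;
    destruct (Rle_lt_dec u v);
    [rewrite Rmin_left, Rmax_right in Hz by lra; lra
    |rewrite Rmin_right, Rmax_left in Hz by lra; lra
    |rewrite Rmin_left, Rmax_right in Hz by lra; lra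
    |rewrite Rmin_right, Rmax_left in Hz by lra; lra]. }
  assert (HPr : forall x, s < x <= tau -> Rg (Phi tau x)).
  { intros x Hx. split. apply Phi_lt; lra. apply Phi_bnd; lra. }
  set (J := fun p : R * R => RInt G (Phi tau (fst p)) (Phi tau (snd p))).
  assert (Step1 : forall x y, s < x < tau -> s < y < tau -> is_RInt g x y (J (x, y))).
  { intros x y Hx Hy. unfold J; simpl.
    assert (Hmm : forall z, Rmin x y <= z <= Rmax x y -> s < z < tau).
    { intros z Hz. destruct (Rle_lt_dec x y).
      rewrite Rmin_left, Rmax_right in Hz by lra; lra.
      rewrite Rmin_right, Rmax_left in Hz by lra; lra. }
    apply (is_RInt_ext (fun y => scal (dPhi tau y) (G (Phi tau y)))).
    - intros z Hz. rewrite Hg. reflexivity.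
      assert (s < z < tau). apply Hmm; lra. lra.
    - apply (is_RInt_comp G (Phi tau) (dPhi tau)).
      + intros z Hz. apply HGc. apply HPr. pose proof (Hmm z Hz). lra.
      + intros z Hz. pose proof (Hmm z Hz). split. apply Phi_der; lra. apply dPhi_cont; lra. }
  assert (EvR : forall e, 0 < e -> at_right s (fun x => s < x < tau /\ Phi tau x - Phi tau s < e)).
  { intros e He. destruct (Phi_rcont s Hs e He) as [d [Hd Hd']].
    apply (ev_right s (Rmin d (tau - s))). apply Rmin_pos; lra.
    intros x Hx. assert (Rmin d (tau - s) <= d) by apply Rmin_l.
    assert (Rmin d (tau - s) <= tau - s) by apply Rmin_r.
    split. lra. apply Hd'. lra. }
  assert (EvL : forall e, 0 < e -> at_left tau (fun y => s < y < tau /\ PI/2 - Phi tau y < e)).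
  { intros e He. destruct (Phi_lcont e He) as [d [Hd Hd']].
    apply (ev_left tau (Rmin d (tau - s))). apply Rmin_pos; lra.
    intros x Hx. assert (Rmin d (tau - s) <= d) by apply Rmin_l.
    assert (Rmin d (tau - s) <= tau - s) by apply Rmin_r.
    split. lra. apply Hd'. lra. }
  set (F := filter_prod (at_right s) (at_left tau)).
  assert (FF : ProperFilter F) by (apply filter_prod_proper).

  assert (Dec : forall x y x' y', s < x < tau -> s < y < tau -> s < x' < tau -> s < y' < tau ->
     J (x, y) - J (x', y') = RInt G (Phi tau x) (Phi tau x') + RInt G (Phi tau y') (Phi tau y)).
  { intros x y x' y' Hx Hy Hx' Hy'. unfold J; simpl.
    assert (R1 := HPr x ltac:(lra)). assert (R2 := HPr y ltac:(lra)).
    assert (R3 := HPr x' ltac:(lra)). assert (R4 := HPr y' ltac:(lra)).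
    rewrite <- (RInt_Chasles G (Phi tau x) (Phi tau x') (Phi tau y)) by (apply Hex; auto).
    rewrite <- (RInt_Chasles G (Phi tau x') (Phi tau y') (Phi tau y)) by (apply Hex; auto).
    change (RInt G (Phi tau x) (Phi tau x') + (RInt G (Phi tau x') (Phi tau y') + RInt G (Phi tau y') (Phi tau y)) -
      RInt G (Phi tau x') (Phi tau y') = RInt G (Phi tau x) (Phi tau x') + RInt G (Phi tau y') (Phi tau y)).
    ring. }
  assert (Hcauchy : exists l, filterlim J F (locally l)).
  { apply (filterlim_locally_cauchy (U := R_CompleteSpace) J).
    intros [eps He].
    set (e := eps / (2 * (M + 1))).
    assert (Hee : 0 < e) by (unfold e; apply Rdiv_lt_0_compat; lra).
    assert (HMe : M * (2 * e) < eps).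
    { unfold e. apply (Rmult_lt_reg_r (M + 1)); [lra|].
      replace (M * (2 * (eps / (2 * (M + 1)))) * (M + 1)) with (M * eps) by (field; lra). nra. }
    exists (fun p => (s < fst p < tau /\ Phi tau (fst p) - Phi tau s < e) /\
                (s < snd p < tau /\ PI/2 - Phi tau (snd p) < e)).
    split.
    - apply (Filter_prod _ _ _ _ _ (EvR e Hee) (EvL e Hee)). intros; simpl; auto.
    - intros [x y] [x' y'] [[Hx Hx2] [Hy Hy2]] [[Hx' Hx'2] [Hy' Hy'2]]. simpl in *.
      apply ballR. simpl.
      rewrite <- Rabs_Ropp. replace (- (J (x', y') - J (x, y))) with (J (x, y) - J (x', y')) by ring.
      rewrite Dec by lra.
      eapply Rle_lt_trans; [apply Rabs_triang|].
      assert (B1 := Hbd (Phi tau x) (Phi tau x') (HPr x ltac:(lra)) (HPr x' ltac:(lra))).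
      assert (B2 := Hbd (Phi tau y') (Phi tau y) (HPr y' ltac:(lra)) (HPr y ltac:(lra))).
      assert (P1 := Phi_lt s x ltac:(lra) ltac:(lra) ltac:(lra)).
      assert (P2 := Phi_lt s x' ltac:(lra) ltac:(lra) ltac:(lra)).
      assert (P3 := Phi_bnd y ltac:(lra)). assert (P4 := Phi_bnd y' ltac:(lra)).
      assert (A1 : Rabs (Phi tau x' - Phi tau x) < e) by (apply Rabs_lt_between'; lra).
      assert (A2 : Rabs (Phi tau y - Phi tau y') < e) by (apply Rabs_lt_between'; lra).
      assert (M * Rabs (Phi tau x' - Phi tau x) <= M * e) by (apply Rmult_le_compat_l; lra).
      assert (M * Rabs (Phi tau y - Phi tau y') <= M * e) by (apply Rmult_le_compat_l; lra).
      lra. }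
  destruct Hcauchy as [l Hl].
  exists l. split.
  - intros P HP. unfold filtermapi.
    assert (HJ := Hl P HP). unfold filtermap in HJ.
    assert (HE : F (fun p => s < fst p < tau /\ s < snd p < tau)).
    { assert (He1 : (0:R) < 1) by lra.
      apply (Filter_prod _ _ _ _ _ (EvR 1 He1) (EvL 1 He1)). intros x y [Hx _] [Hy _]; simpl; auto. }
    generalize (filter_and _ _ HJ HE). apply filter_imp.
    intros [x y] [H1 [H2 H3]]. exists (J (x, y)). split; [apply Step1; simpl in *; tauto| auto].
  - intros u Hu.
    apply Rle_plus_epsilon. intros eps He.
    set (e := Rmin (eps / (4 * (M + 1))) (u - Phi tau s)).
    assert (Hee : 0 < e) by (unfold e; apply Rmin_pos; [apply Rdiv_lt_0_compat|]; lra).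
    assert (He1 : e <= eps / (4 * (M + 1))) by apply Rmin_l.
    assert (He2 : e <= u - Phi tau s) by apply Rmin_r.
    assert (HMe : M * e <= eps / 4).
    { apply Rle_trans with (M * (eps / (4 * (M + 1)))). apply Rmult_le_compat_l; lra.
      apply (Rmult_le_reg_r (M + 1)); [lra|].
      replace (M * (eps / (4 * (M + 1))) * (M + 1)) with (M * (eps / 4)) by (field; lra). nra. }
    assert (He2' : 0 < eps / 2) by lra.
    assert (HJ := proj1 (filterlim_locally _ _) Hl (mkposreal _ He2')).
    assert (HE : F (fun p => (s < fst p < tau /\ Phi tau (fst p) - Phi tau s < e) /\
                (s < snd p < tau /\ PI/2 - Phi tau (snd p) < e))).
    { apply (Filter_prod _ _ _ _ _ (EvR e Hee) (EvL e Hee)). intros; simpl; auto. }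
    destruct (filter_ex _ (filter_and _ _ HJ HE)) as [[x y] [Hb [[Hx Hx2] [Hy Hy2]]]].
    simpl in *. rball Hb.
    assert (Rx := HPr x ltac:(lra)). assert (Ry := HPr y ltac:(lra)).
    assert (Ru : Rg u) by (unfold Rg; lra). assert (Rp : Rg (PI/2)) by (unfold Rg; lra).
    assert (E : J (x, y) - RInt G u (PI/2) = RInt G (Phi tau x) u - RInt G (Phi tau y) (PI/2)).
    { unfold J; simpl.
      rewrite <- (RInt_Chasles G (Phi tau x) u (Phi tau y)) by (apply Hex; auto).
      rewrite <- (RInt_Chasles G u (Phi tau y) (PI/2)) by (apply Hex; auto).
      change (RInt G (Phi tau x) u + RInt G u (Phi tau y) -
        (RInt G u (Phi tau y) + RInt G (Phi tau y) (PI / 2)) =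
        RInt G (Phi tau x) u - RInt G (Phi tau y) (PI / 2)). ring. }
    assert (B1 := Hbd (Phi tau x) u Rx Ru). assert (B2 := Hbd (Phi tau y) (PI/2) Ry Rp).
    assert (P1 := Phi_lt s x ltac:(lra) ltac:(lra) ltac:(lra)). pose proof Rx as Rx'. pose proof Ry as Ry'. unfold Rg in Rx', Ry'.
    rewrite (Rabs_pos_eq (u - Phi tau x)) in B1 by lra.
    rewrite (Rabs_pos_eq (PI/2 - Phi tau y)) in B2 by lra.
    assert (M * (u - Phi tau x) <= M * (u - Phi tau s)) by (apply Rmult_le_compat_l; lra).
    assert (M * (PI / 2 - Phi tau y) <= M * e) by (apply Rmult_le_compat_l; lra).
    replace (l - RInt G u (PI/2)) with ((l - J (x, y)) + (J (x, y) - RInt G u (PI/2))) by ring.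
    rewrite E. eapply Rle_trans; [apply Rabs_triang|].
    assert (Hb' : Rabs (l - J (x, y)) < eps/2) by (rewrite <- Rabs_Ropp; replace (- (l - J (x, y))) with (J (x, y) - l) by ring; exact Hb).
    assert (Rabs (RInt G (Phi tau x) u - RInt G (Phi tau y) (PI / 2)) <=
            Rabs (RInt G (Phi tau x) u) + Rabs (RInt G (Phi tau y) (PI / 2))).
    { unfold Rminus. eapply Rle_trans; [apply Rabs_triang|]. rewrite Rabs_Ropp; lra. }
    lra.
Qed.

End Transfer.

Section Gen.
Variable g : R -> R.
Variables lo tau : R.
Hypothesis Hc : forall t, lo < t < tau -> continuous g t.

Lemma exg u v : lo < u < tau -> lo < v < tau -> ex_RInt g u v.
Proof.
  intros Hu Hv. apply (@ex_RInt_continuous R_CompleteNormedModule). intros z Hz. apply Hc.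
  destruct (Rle_lt_dec u v). rewrite Rmin_left, Rmax_right in Hz by lra; lra.
  rewrite Rmin_right, Rmax_left in Hz by lra; lra.
Qed.

Lemma near_s s : lo < s < tau -> forall eps, 0 < eps ->
  exists dl, 0 < dl /\ forall x, Rabs (x - s) < dl -> Rabs (RInt g s x) < eps.
Proof.
  intros Hs. apply RInt_near. exists (Rmin (s - lo) (tau - s)). split. apply Rmin_pos; lra.
  intros t Ht. apply Hc. assert (Rmin (s - lo) (tau - s) <= s - lo) by apply Rmin_l.
  assert (Rmin (s - lo) (tau - s) <= tau - s) by apply Rmin_r.
  apply Rabs_lt_between' in Ht. lra.
Qed.

Lemma EQ s l : lo < s < tau -> is_RInt_gen g (at_right s) (at_left tau) l ->
  filterlim (fun y => RInt g s y) (at_left tau) (locally l).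
Proof.
  intros Hs HI. apply filterlim_locally. intros [eps He]. simpl.
  assert (He2 : 0 < eps / 2) by lra.
  specialize (HI (ball l (mkposreal _ He2)) (locally_ball _ _)). unfold filtermapi in HI.
  destruct HI as [Q Rr HQ HR HQR].
  destruct (near_s s Hs (eps/2) He2) as [dl [Hdl Hdl']].
  assert (Hm : 0 < Rmin dl (tau - s)) by (apply Rmin_pos; lra).
  assert (Rmin dl (tau - s) <= dl) by apply Rmin_l. assert (Rmin dl (tau - s) <= tau - s) by apply Rmin_r.
  destruct (filter_ex _ (filter_and _ _ HQ (ev_right s _ (fun x => s < x < s + Rmin dl (tau - s)) Hm (fun x H => H))))
    as [x [Qx Hx]].
  assert (Hx' : 0 < tau - x) by lra.
  generalize (filter_and _ _ HR (ev_left tau _ (fun y => x < y < tau) Hx' ltac:(intros y Hy; lra))).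
  apply filter_imp. intros y [Ry Hy].
  destruct (HQR x y Qx Ry) as [v [Hv Hvb]]. simpl in Hv. rball Hvb.
  apply ballR.
  rewrite <- (RInt_Chasles g s x y) by (apply exg; lra).
  rewrite (is_RInt_unique g x y v Hv).
  assert (Rabs (RInt g s x) < eps / 2) by (apply Hdl'; apply Rabs_lt_between'; lra).
  change (Rabs (RInt g s x + v - l) < eps).
  replace (RInt g s x + v - l) with (RInt g s x + (v - l)) by ring.
  eapply Rle_lt_trans; [apply Rabs_triang|]. lra.
Qed.

Lemma Rep c s L : lo < c < tau -> lo < s < tau ->
  filterlim (fun y => RInt g c y) (at_left tau) (locally L) ->
  is_RInt_gen g (at_right s) (at_left tau) (L + RInt g s c).
Proof.
  intros Hcc Hs HL P [[eps He] HP]. unfold filtermapi.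
  assert (He2 : 0 < eps / 2) by lra.
  destruct (near_s s Hs (eps/2) He2) as [dl [Hdl Hdl']].
  assert (Hm : 0 < Rmin dl (tau - s)) by (apply Rmin_pos; lra).
  assert (Rmin dl (tau - s) <= dl) by apply Rmin_l. assert (Rmin dl (tau - s) <= tau - s) by apply Rmin_r.
  assert (HLy := proj1 (filterlim_locally _ _) HL (mkposreal _ He2)).
  assert (Hm2 : 0 < tau - Rmax lo s) by (apply Rmax_case; lra).
  apply (Filter_prod _ _ _ (fun x => s < x < s + Rmin dl (tau - s))
     (fun y => ball L (eps/2) (RInt g c y) /\ Rmax lo s < y < tau)).
  - apply (ev_right s _ _ Hm). auto.
  - apply (filter_and _ _ HLy). apply (ev_left tau _ _ Hm2). intros y Hy; lra.
  - intros x y Hx [Hy1 Hy2]. simpl. rball Hy1.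
    assert (lo <= Rmax lo s) by apply Rmax_l. assert (s <= Rmax lo s) by apply Rmax_r.
    exists (RInt g x y). split. apply (@RInt_correct R_CompleteNormedModule). apply exg; lra.
    apply HP. apply ballR.
    rewrite <- (RInt_Chasles g x c y) by (apply exg; lra).
    rewrite <- (RInt_Chasles g x s c) by (apply exg; lra).
    rewrite <- (opp_RInt_swap g s x) by (apply exg; lra).
    assert (Rabs (RInt g s x) < eps / 2) by (apply Hdl'; apply Rabs_lt_between'; lra).
    change (Rabs (- RInt g s x + RInt g s c + RInt g c y - (L + RInt g s c)) < eps).
    replace (- RInt g s x + RInt g s c + RInt g c y - (L + RInt g s c)) with
      (- RInt g s x + (RInt g c y - L)) by ring.
    eapply Rle_lt_trans; [apply Rabs_triang|]. rewrite Rabs_Ropp. lra.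
Qed.
End Gen.

Section Rho.
Variable a : R -> R.
Hypothesis Ha : strongly_regular_scale_factor a.

Definition gR tau t := aext a t / sqrt (aext a tau ^ 2 - aext a t ^ 2).
Definition HR tau p := hh a (ainv a (a tau * sin p)).

Lemma aext_eq t : 0 <= t -> aext a t = a t.
Proof. intros; unfold aext; rewrite Rabs_pos_eq; auto. Qed.

Lemma aext_lt t tau : Rabs t < tau -> aext a t < aext a tau.
Proof.
  intros H. unfold aext. pose proof (Rabs_pos t).
  rewrite (Rabs_pos_eq tau) by lra. apply a_incr; auto.
Qed.

Lemma aext_nonneg t : 0 <= aext a t.
Proof. unfold aext; apply a_nonneg; auto; apply Rabs_pos. Qed.

Lemma gR_joint (x0 : R * R) p : 0 < fst x0 -> Rabs p < fst x0 ->
  continuous (fun z : (R * R) * R => gR (fst (fst z)) (snd z)) (x0, p).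
Proof.
  intros H1 H2. destruct x0 as [t0 s0]. simpl in *. unfold gR.
  assert (Hlt := aext_lt p t0 H2). pose proof (aext_nonneg p).
  apply cont_div.
  - apply cont_snd. apply aext_cont; auto.
  - apply (cont_comp1 (fun z : (R*R)*R => aext a (fst (fst z)) ^ 2 - aext a (snd z) ^ 2) sqrt).
    + apply cont_minus; apply cont_pow.
      * apply (cont_fst (fun x : R * R => aext a (fst x))). apply (cont_fst (aext a)). apply aext_cont; auto.
      * apply cont_snd. apply aext_cont; auto.
    + apply continuous_sqrt.
  - simpl. apply Rgt_not_eq. apply sqrt_lt_R0. nra.
Qed.

Lemma gR_cont tau t : 0 < tau -> Rabs t < tau -> continuous (gR tau) t.
Proof.
  intros H1 H2. apply (cont_partial (fun x : R * R => gR (fst x)) (tau, 0) t).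
  apply gR_joint; auto.
Qed.

Lemma HR_joint tau p : 0 < tau -> 0 < p < PI ->
  continuous (fun z : R * R => HR (fst z) (snd z)) (tau, p).
Proof.
  intros Ht Hp. unfold HR.
  assert (Hs : 0 < sin p) by (apply sin_gt_0; lra).
  assert (HA := a_pos a Ha tau Ht).
  assert (Hy : 0 < a tau * sin p) by nra.
  apply (cont_comp1 (fun z : R * R => ainv a (a (fst z) * sin (snd z))) (hh a)).
  - apply (cont_comp1 (fun z : R * R => a (fst z) * sin (snd z)) (ainv a)).
    + apply cont_mult. apply cont_fst. apply (a_cont a Ha); auto. apply cont_snd. apply continuous_sin.
    + apply (ainv_cont a Ha). simpl; auto.
  - apply (hh_cont a Ha). simpl. apply (ainv_pos a Ha); auto.
Qed.

Lemma HR_bound tau p : 0 < tau -> 0 < p <= PI/2 -> 0 < HR tau p <= hh a tau.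
Proof.
  intros Ht Hp. pose proof PI_RGT_0. unfold HR.
  assert (Hs : 0 < sin p) by (apply sin_gt_0; lra).
  assert (Hs1 : sin p <= 1) by apply SIN_bound.
  assert (HA := a_pos a Ha tau Ht).
  assert (Hy : 0 < a tau * sin p) by nra.
  assert (Hp' := ainv_pos a Ha _ Hy).
  split. apply (hh_pos a Ha); auto.
  apply (hh_mono a Ha); auto. apply (ainv_le a Ha); nra.
Qed.

Lemma Phi0 tau : 0 < tau -> Phi a tau 0 = 0.
Proof.
  intros. unfold Phi. rewrite (a0 a Ha). unfold Rdiv. rewrite Rmult_0_l. apply asin_0.
Qed.

Lemma gR_id tau t : 0 < t < tau -> gR tau t = dPhi a tau t * HR tau (Phi a tau t).
Proof.
  intros Ht. unfold gR, HR, Phi, dPhi, hh.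
  rewrite !aext_eq by lra.
  assert (HA := a_pos a Ha tau ltac:(lra)). assert (Hat := a_pos a Ha t ltac:(lra)).
  assert (Hlt := a_incr a Ha t tau ltac:(lra) ltac:(lra)).
  rewrite sin_asin.
  2:{ split. apply Rle_trans with 0. lra. apply Rdiv_le_0_compat; lra.
      apply (Rmult_le_reg_r (a tau)); [lra|]. unfold Rdiv; rewrite Rmult_assoc, Rinv_l by lra. lra. }
  replace (a tau * (a t / a tau)) with (a t) by (field; lra).
  rewrite (ainv_a a Ha) by lra.
  assert (Hd := da_pos a Ha t ltac:(lra)).
  assert (Hsq : 0 < sqrt (a tau ^ 2 - a t ^ 2)) by (apply sqrt_lt_R0; nra).
  field. split; lra.
Qed.

Lemma rhoM_char tau : 0 < tau ->
  is_RInt_gen (gR tau) (at_right 0) (at_left tau) (rho_M a tau) /\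
  forall u, 0 < u <= PI/2 -> Rabs (rho_M a tau - RInt (HR tau) u (PI/2)) <= hh a tau * u.
Proof.
  intros Ht.
  destruct (transfer a Ha tau Ht 0 ltac:(lra) (gR tau) (HR tau) (hh a tau)) as [l [Hl Hc]].
  - apply gR_id.
  - intros p Hp. rewrite Phi0 in Hp by auto. apply (cont_partial (fun t => HR t) tau p).
    apply HR_joint; auto. pose proof PI_RGT_0; lra.
  - intros p Hp. rewrite Phi0 in Hp by auto. destruct (HR_bound tau p Ht Hp).
    rewrite Rabs_pos_eq; lra.
  - assert (E : rho_M a tau = l).
    { unfold rho_M, rho_int. apply is_RInt_gen_unique; auto. }
    rewrite E. split; auto. intros u Hu. specialize (Hc u). rewrite Phi0 in Hc by auto.
    rewrite Rminus_0_r in Hc. apply Hc; auto.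
Qed.

Lemma rhoM_cont tau0 : 0 < tau0 -> continuous (rho_M a) tau0.
Proof.
  intros Ht0.
  pose proof PI_RGT_0.
  apply (engine (X := R_UniformSpace) tau0 (fun t => tau0 / 2 < t < 2 * tau0) (fun _ => 0) HR (rho_M a) (hh a (2 * tau0))).
  - assert (Hd : 0 < tau0 / 2) by lra. exists (mkposreal _ Hd). intros y Hy. rball Hy.
    apply Rabs_lt_between' in Hy. lra.
  - intros; lra.
  - apply continuous_const.
  - intros p Hp. apply HR_joint; auto; lra.
  - intros x p Hx Hp. apply (cont_partial (fun t => HR t) x p). apply HR_joint; lra.
  - intros x u Hx Hu. destruct (rhoM_char x ltac:(lra)) as [_ Hc].
    eapply Rle_trans. apply Hc; lra. rewrite Rminus_0_r. apply Rmult_le_compat_r. lra.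
    apply (hh_mono a Ha); lra.
Qed.

Lemma rho_rep tau s : 0 < tau -> - tau < s < tau ->
  rho_int a tau s = rho_M a tau + RInt (gR tau) s 0.
Proof.
  intros Ht Hs. unfold rho_int. fold (gR tau).
  apply is_RInt_gen_unique.
  apply (Rep (gR tau) (- tau) tau).
  - intros t H; apply gR_cont; auto. apply Rabs_def1; lra.
  - lra.
  - lra.
  - apply (EQ (gR tau) (- tau) tau).
    + intros t H; apply gR_cont; auto. apply Rabs_def1; lra.
    + lra.
    + apply rhoM_char; auto.
Qed.

End Rho.

Section Rho2.
Variable a : R -> R.
Hypothesis Ha : strongly_regular_scale_factor a.

Definition Rfun tau s := rho_M a tau + RInt (gR a tau) s 0.

Lemma Rfun_cont (x0 : R * R) : 0 < fst x0 -> Rabs (snd x0) < fst x0 ->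
  continuous (fun x : R * R => Rfun (fst x) (snd x)) x0.
Proof.
  destruct x0 as [t0 s0]. simpl. intros H1 H2. unfold Rfun.
  set (d0 := (t0 + Rabs s0) / 2).
  pose proof (Rabs_pos s0).
  apply cont_plus.
  - apply (cont_fst (rho_M a)). apply rhoM_cont; auto.
  - apply (PPI (X := prod_UniformSpace R_UniformSpace R_UniformSpace) (t0, s0) (fun x => gR a (fst x)) snd (- d0) d0 0).
    + simpl. assert (Hq : Rabs s0 < d0) by (unfold d0; lra). apply Rabs_def2 in Hq. lra.
    + unfold d0; lra.
    + intros p Hp. apply gR_joint; simpl; auto. apply Rabs_def1; unfold d0 in *; lra.
    + assert (Hd : 0 < (t0 - Rabs s0) / 2) by lra.
      exists (mkposreal _ Hd). intros [t s] [Ht _]. simpl in Ht. rball Ht. apply Rabs_lt_between' in Ht.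
      intros p Hp. apply gR_cont; auto. simpl; lra. simpl. apply Rabs_def1; unfold d0 in *; lra.
    + apply continuous_snd.
Qed.

Lemma gR_pos tau t : 0 < tau -> Rabs t < tau -> t <> 0 -> 0 < gR a tau t.
Proof.
  intros H1 H2 H3. unfold gR. pose proof (aext_lt a Ha t tau H2).
  assert (0 < aext a t).
  { unfold aext. apply a_pos; auto. apply Rabs_pos_lt; auto. }
  apply Rdiv_lt_0_compat; auto. apply sqrt_lt_R0. nra.
Qed.

Lemma gR_nonneg tau t : 0 < tau -> Rabs t < tau -> 0 <= gR a tau t.
Proof.
  intros H1 H2. destruct (Req_dec t 0). subst. unfold gR, aext. rewrite Rabs_R0, (a0 a Ha).
  unfold Rdiv; rewrite Rmult_0_l; lra. left; apply gR_pos; auto.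
Qed.

Lemma exgR tau u v : 0 < tau -> - tau < u < tau -> - tau < v < tau -> ex_RInt (gR a tau) u v.
Proof.
  intros Ht Hu Hv. apply (exg (gR a tau) (- tau) tau); auto.
  intros t H; apply gR_cont; auto. apply Rabs_def1; lra.
Qed.

Lemma RInt_gR_pos tau u v : 0 < tau -> - tau < u < v -> v < tau -> 0 < RInt (gR a tau) u v.
Proof.
  intros Ht Hu Hv.
  assert (Hc : forall t, -tau < t < tau -> continuous (gR a tau) t).
  { intros t H; apply gR_cont; auto. apply Rabs_def1; lra. }
  destruct (Rle_lt_dec v 0).
  - apply RInt_gt_0; [lra| intros x Hx; apply gR_pos; auto; [apply Rabs_def1; lra| lra] | intros x Hx; apply Hc; lra].
  - destruct (Rle_lt_dec 0 u).
    + apply RInt_gt_0; [lra| intros x Hx; apply gR_pos; auto; [apply Rabs_def1; lra| lra] | intros x Hx; apply Hc; lra].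
    + rewrite <- (RInt_Chasles (gR a tau) u 0 v) by (apply exgR; lra).
      assert (0 <= RInt (gR a tau) u 0).
      { apply RInt_ge_0. lra. apply exgR; lra. intros x Hx; apply gR_nonneg; auto. apply Rabs_def1; lra. }
      assert (0 < RInt (gR a tau) 0 v).
      { apply RInt_gt_0; [lra| intros x Hx; apply gR_pos; auto; [apply Rabs_def1; lra| lra] | intros x Hx; apply Hc; lra]. }
      change (0 < RInt (gR a tau) u 0 + RInt (gR a tau) 0 v). lra.
Qed.

Lemma Rfun_decr tau s s' : 0 < tau -> - tau < s < s' -> s' < tau -> Rfun tau s' < Rfun tau s.
Proof.
  intros Ht Hs Hs'. unfold Rfun.
  rewrite <- (RInt_Chasles (gR a tau) s s' 0) by (apply exgR; lra).
  pose proof (RInt_gR_pos tau s s' Ht Hs Hs').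
  change (rho_M a tau + RInt (gR a tau) s' 0 < rho_M a tau + (RInt (gR a tau) s s' + RInt (gR a tau) s' 0)).
  lra.
Qed.

Lemma lim0 tau : 0 < tau -> filterlim (fun y => RInt (gR a tau) 0 y) (at_left tau) (locally (rho_M a tau)).
Proof.
  intros Ht. apply (EQ (gR a tau) (- tau) tau).
  - intros t H; apply gR_cont; auto. apply Rabs_def1; lra.
  - lra.
  - apply rhoM_char; auto.
Qed.

Lemma gR_even tau t : gR a tau (- t) = gR a tau t.
Proof. unfold gR, aext. rewrite Rabs_Ropp. reflexivity. Qed.

Lemma RInt_gR_even tau s : 0 < tau -> - tau < s < tau -> RInt (gR a tau) s 0 = RInt (gR a tau) 0 (- s).
Proof.
  intros Ht Hs.
  assert (Ex : ex_RInt (gR a tau) 0 (- s)) by (apply exgR; lra).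
  pose proof (RInt_correct _ _ _ Ex) as H.
  assert (H' : is_RInt (gR a tau) (- 0) (- s) (RInt (gR a tau) 0 (- s))) by (rewrite Ropp_0; auto).
  pose proof (is_RInt_comp_opp _ _ _ _ H') as H2.
  apply (is_RInt_ext _ (fun y => - gR a tau y)) in H2.
  2:{ intros x _. change (- gR a tau (- x) = - gR a tau x). rewrite gR_even; auto. }
  assert (E : RInt (fun y => - gR a tau y) 0 s = RInt (gR a tau) 0 (- s)) by (apply is_RInt_unique; auto).
  rewrite (RInt_opp (V := R_CompleteNormedModule)) in E by (apply exgR; lra).
  change (- RInt (gR a tau) 0 s = RInt (gR a tau) 0 (- s)) in E.
  rewrite <- E. rewrite <- (opp_RInt_swap (V := R_CompleteNormedModule)) by (apply exgR; lra). reflexivity.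
Qed.

Lemma Rfun_rep tau s : 0 < tau -> - tau < s < tau -> rho_int a tau s = Rfun tau s.
Proof. intros; apply rho_rep; auto. Qed.

Lemma Rfun_low tau r : 0 < tau -> 0 < r -> exists s, 0 < s < tau /\ Rfun tau s < r.
Proof.
  intros Ht Hr. assert (HL := proj1 (filterlim_locally _ _) (lim0 tau Ht) (mkposreal r Hr)).
  assert (Htt : 0 < tau) by auto.
  destruct (filter_ex (F := at_left tau) _ (filter_and _ _ HL (ev_left tau tau (fun y => 0 < y < tau) Htt ltac:(intros; lra))))
    as [y [Hy1 Hy2]].
  exists y. split; auto. rball Hy1. unfold Rfun.
  rewrite <- (opp_RInt_swap (V := R_CompleteNormedModule)) by (apply exgR; lra).
  change (rho_M a tau - RInt (gR a tau) 0 y < r). apply Rabs_lt_between' in Hy1. lra.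
Qed.

Lemma Rfun_high tau r : 0 < tau -> r < 2 * rho_M a tau -> exists s, - tau < s < 0 /\ r < Rfun tau s.
Proof.
  intros Ht Hr. assert (He : 0 < 2 * rho_M a tau - r) by lra.
  assert (HL := proj1 (filterlim_locally _ _) (lim0 tau Ht) (mkposreal _ He)).
  destruct (filter_ex (F := at_left tau) _ (filter_and _ _ HL (ev_left tau tau (fun y => 0 < y < tau) Ht ltac:(intros; lra))))
    as [y [Hy1 Hy2]].
  exists (- y). split. lra. rball Hy1. unfold Rfun.
  rewrite RInt_gR_even by lra. rewrite Ropp_involutive.
  apply Rabs_lt_between' in Hy1. lra.
Qed.

Lemma t0_eq tau rho s : 0 < tau -> - tau < s < tau -> rho = Rfun tau s -> t0_of a tau rho = s.
Proof.
  intros Ht Hs Hr. unfold t0_of.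
  assert (Ex : exists s, - tau < s < tau /\ rho = rho_int a tau s).
  { exists s. split; auto. rewrite Rfun_rep; auto. }
  destruct (epsilon_spec (inhabits 0) _ Ex) as [H1 H2].
  set (s' := epsilon (inhabits 0) (fun s => - tau < s < tau /\ rho = rho_int a tau s)) in *.
  rewrite Rfun_rep in H2 by auto.
  destruct (Rtotal_order s' s) as [H|[H|H]]; auto.
  - pose proof (Rfun_decr tau s' s Ht ltac:(lra) ltac:(lra)). lra.
  - pose proof (Rfun_decr tau s s' Ht ltac:(lra) ltac:(lra)). lra.
Qed.

Lemma t0_cont (p : R * R) : 0 < fst p -> 0 < snd p < 2 * rho_M a (fst p) ->
  - fst p < t0_of a (fst p) (snd p) < fst p /\
  forall eps, 0 < eps -> locally p (fun q => Rabs (t0_of a (fst q) (snd q) - t0_of a (fst p) (snd p)) < eps).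
Proof.
  destruct p as [t0 r0]. simpl. intros Ht0 Hr0.
  destruct (Rfun_low t0 r0 Ht0 ltac:(lra)) as [s2 [Hs2 Hs2']].
  destruct (Rfun_high t0 r0 Ht0 ltac:(lra)) as [s1 [Hs1 Hs1']].
  assert (Hc1 : forall tau, 0 < tau -> forall z, - tau < z < tau -> continuity_pt (Rfun tau) z).
  { intros tau Htau z Hz. apply continuity_pt_filterlim.
    apply (cont_partial (fun t s => Rfun t s) tau z).
    apply (Rfun_cont (tau, z)); simpl; auto. apply Rabs_def1; lra. }
  assert (Hex : forall tau r u v, 0 < tau -> - tau < u < v -> v < tau -> r < Rfun tau u -> Rfun tau v < r ->
     exists s, u <= s <= v /\ r = Rfun tau s).
  { intros tau r u v Htau Hu Hv H1 H2.
    destruct (Ranalysis5.IVT_interv (fun s => r - Rfun tau s) u v) as [z [Hz Hz']].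
    - intros z Hz. apply continuity_pt_minus. apply continuity_pt_const. intros ? ?; auto.
      apply Hc1; auto; lra.
    - lra.
    - lra.
    - lra.
    - exists z. split; auto. lra. }
  destruct (Hex t0 r0 s1 s2 Ht0 ltac:(lra) ltac:(lra) Hs1' Hs2') as [ts [Hts Hts']].
  assert (Et := t0_eq t0 r0 ts Ht0 ltac:(lra) Hts'). rewrite Et.
  split. lra.
  intros eps He.
  pose proof (Rabs_pos ts).
  assert (Hts_abs : Rabs ts < t0) by (apply Rabs_def1; lra).
  set (e := Rmin (eps / 2) ((t0 - Rabs ts) / 2)).
  assert (He0 : 0 < e) by (unfold e; apply Rmin_pos; lra).
  assert (He1 : e <= eps / 2) by apply Rmin_l. assert (He2 : e <= (t0 - Rabs ts) / 2) by apply Rmin_r.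
  set (u := ts - e). set (v := ts + e).
  assert (Hu : - t0 < u) by (unfold u; apply Rabs_def2 in Hts_abs; pose proof (Rle_abs ts); pose proof (Rle_abs (- ts)); rewrite Rabs_Ropp in *; lra).
  assert (Hv : v < t0) by (unfold v; pose proof (Rle_abs ts); lra).
  assert (Hu' : Rabs u <= (t0 + Rabs ts) / 2).
  { unfold u. apply Rabs_le. split. pose proof (Rle_abs (- ts)); rewrite Rabs_Ropp in *; lra. pose proof (Rle_abs ts); lra. }
  assert (Hv' : Rabs v <= (t0 + Rabs ts) / 2).
  { unfold v. apply Rabs_le. split. pose proof (Rle_abs (- ts)); rewrite Rabs_Ropp in *; lra. pose proof (Rle_abs ts); lra. }
  assert (Gu : r0 < Rfun t0 u) by (rewrite Hts'; apply Rfun_decr; unfold u, v in *; auto; lra).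
  assert (Gv : Rfun t0 v < r0) by (rewrite Hts'; apply Rfun_decr; unfold u, v in *; auto; lra).
  set (gap := Rmin (Rfun t0 u - r0) (r0 - Rfun t0 v)).
  assert (Hg : 0 < gap) by (unfold gap; apply Rmin_pos; lra).
  assert (Hg1 : gap <= Rfun t0 u - r0) by apply Rmin_l. assert (Hg2 : gap <= r0 - Rfun t0 v) by apply Rmin_r.
  assert (Hg2' : 0 < gap / 2) by lra.
  assert (Cu : continuous (fun t => Rfun t u) t0).
  { apply (cont_partial (fun (s : R) t => Rfun t s) u t0).
    apply (continuous_comp (fun z : R * R => (snd z, fst z)) (fun x : R * R => Rfun (fst x) (snd x))).
    apply (continuous_comp_2 snd fst pair). apply continuous_snd. apply continuous_fst.
    intros P [e' He']. exists e'. intros y Hy. apply He'. exact Hy.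
    apply Rfun_cont; simpl; auto. lra. }
  assert (Cv : continuous (fun t => Rfun t v) t0).
  { apply (cont_partial (fun (s : R) t => Rfun t s) v t0).
    apply (continuous_comp (fun z : R * R => (snd z, fst z)) (fun x : R * R => Rfun (fst x) (snd x))).
    apply (continuous_comp_2 snd fst pair). apply continuous_snd. apply continuous_fst.
    intros P [e' He']. exists e'. intros y Hy. apply He'. exact Hy.
    apply Rfun_cont; simpl; auto. lra. }
  destruct (proj1 (filterlim_locally _ _) Cu (mkposreal _ Hg2')) as [d1 Hd1].
  destruct (proj1 (filterlim_locally _ _) Cv (mkposreal _ Hg2')) as [d2 Hd2].
  assert (Hd3 : 0 < (t0 - Rabs ts) / 2) by lra.
  set (dd := Rmin (Rmin d1 d2) (Rmin (gap / 2) ((t0 - Rabs ts) / 2))).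
  assert (Hdd : 0 < dd).
  { unfold dd. apply Rmin_pos; apply Rmin_pos; auto. destruct d1; auto. destruct d2; auto. }
  assert (Rmin d1 d2 <= d1) by apply Rmin_l. assert (Rmin d1 d2 <= d2) by apply Rmin_r.
  assert (dd <= Rmin d1 d2) by apply Rmin_l. assert (dd <= Rmin (gap / 2) ((t0 - Rabs ts) / 2)) by apply Rmin_r.
  assert (Rmin (gap / 2) ((t0 - Rabs ts) / 2) <= gap / 2) by apply Rmin_l.
  assert (Rmin (gap / 2) ((t0 - Rabs ts) / 2) <= (t0 - Rabs ts) / 2) by apply Rmin_r.
  exists (mkposreal dd Hdd). intros [t r] [Hb1 Hb2]. simpl in *. rball Hb1. rball Hb2.
  assert (B1 : ball t0 d1 t) by (apply ballR; lra).
  assert (B2 : ball t0 d2 t) by (apply ballR; lra).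
  specialize (Hd1 t B1). specialize (Hd2 t B2). rball Hd1. rball Hd2.
  apply Rabs_lt_between' in Hd1. apply Rabs_lt_between' in Hd2.
  apply Rabs_lt_between' in Hb1. apply Rabs_lt_between' in Hb2.
  assert (Htp : 0 < t) by lra.
  assert (Hut : - t < u) by (pose proof (Rle_abs (- u)); rewrite Rabs_Ropp in *; lra).
  assert (Hvt : v < t) by (pose proof (Rle_abs v); lra).
  destruct (Hex t r u v Htp ltac:(split; [exact Hut| unfold u, v; lra]) Hvt ltac:(lra) ltac:(lra)) as [z [Hz Hz']].
  rewrite (t0_eq t r z Htp ltac:(lra) Hz').
  apply Rabs_lt_between'. unfold u, v in Hz. lra.
Qed.

End Rho2.

Section FF.
Variable a : R -> R.
Hypothesis Ha : strongly_regular_scale_factor a.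
Variable K : R.
Hypothesis HK1 : 1 <= K.
Hypothesis HK : forall t, 0 < t -> - K <= a t * Derive (Derive a) t / (Derive a t) ^ 2.

Definition GF tau u p :=
  Derive (Derive a) (ainv a (a tau * sin p)) / Derive a (ainv a (a tau * sin p)) ^ 3 *
  (sqrt (a tau ^ 2 - a u ^ 2) - sqrt (a tau ^ 2 - (a tau * sin p) ^ 2)).

Definition gF tau u t := Derive (Derive a) t / (Derive a t) ^ 2 *
              (sqrt (a tau ^ 2 - a u ^ 2) / sqrt (a tau ^ 2 - a t ^ 2) - 1).

Lemma gF_id tau u t : 0 < t < tau -> gF tau u t = dPhi a tau t * GF tau u (Phi a tau t).
Proof.
  intros Ht. unfold gF, GF, Phi, dPhi.
  assert (HA := a_pos a Ha tau ltac:(lra)). assert (Hat := a_pos a Ha t ltac:(lra)).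
  assert (Hlt := a_incr a Ha t tau ltac:(lra) ltac:(lra)).
  rewrite sin_asin.
  2:{ split. apply Rle_trans with 0. lra. apply Rdiv_le_0_compat; lra.
      apply (Rmult_le_reg_r (a tau)); [lra|]. unfold Rdiv; rewrite Rmult_assoc, Rinv_l by lra. lra. }
  replace (a tau * (a t / a tau)) with (a t) by (field; lra).
  rewrite (ainv_a a Ha) by lra.
  assert (Hd := da_pos a Ha t ltac:(lra)).
  assert (Hsq : 0 < sqrt (a tau ^ 2 - a t ^ 2)) by (apply sqrt_lt_R0; nra).
  field. split; lra.
Qed.

Lemma GF_bound tau u p : 0 < tau -> 0 <= u < tau -> Phi a tau u < p <= PI/2 ->
  Rabs (GF tau u p) <= K / Derive a tau.
Proof.
  intros Ht Hu Hp. pose proof PI_RGT_0.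
  set (A := a tau). assert (HA : 0 < A) by (apply a_pos; auto).
  assert (Hau := a_nonneg a Ha u (proj1 Hu)).
  assert (Haut := a_incr a Ha u tau (proj1 Hu) (proj2 Hu)). fold A in Haut.
  assert (Hr : 0 <= a u / A <= 1) by (apply ratio_bnd; auto; lra).
  assert (HP0 := Phi_nonneg a Ha tau Ht u ltac:(lra)).
  assert (Hs : 0 < sin p) by (apply sin_gt_0; lra).
  assert (Hs1 : sin p <= 1) by apply SIN_bound.
  assert (Hsu : a u / A <= sin p) by (apply sin_asin_le; [lra| unfold Phi in Hp; fold A in Hp; lra]).
  set (y := A * sin p).
  assert (Hy0 : 0 < y) by (unfold y; nra).
  assert (HyA : y <= A) by (unfold y; nra).
  assert (Hyu : a u <= y).
  { unfold y. apply (Rmult_le_compat_l A) in Hsu; [|lra].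
    replace (A * (a u / A)) with (a u) in Hsu by (field; lra). lra. }
  set (t' := ainv a y).
  assert (Ht' : 0 < t') by (apply ainv_pos; auto).
  assert (Hat' : a t' = y) by (apply ainv_spec; auto; lra).
  assert (Ht'tau : t' <= tau) by (apply ainv_le; auto; lra).
  assert (Hd := da_pos a Ha t' Ht').
  assert (Hq1 := proj2 (a_q a Ha t' Ht')). assert (Hq2 := HK t' Ht').
  rewrite Hat' in Hq1, Hq2.
  set (q := y * Derive (Derive a) t' / Derive a t' ^ 2) in *.
  assert (Hq : Rabs q <= K) by (apply Rabs_le; lra).
  assert (Edd : Derive (Derive a) t' / Derive a t' ^ 3 = q / (y * Derive a t')) by (unfold q; field; lra).
  set (S0 := sqrt (A ^ 2 - a u ^ 2)). set (Sy := sqrt (A ^ 2 - y ^ 2)).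
  assert (HSy : 0 <= Sy) by apply sqrt_pos.
  assert (HSy2 : Sy * Sy = A ^ 2 - y ^ 2) by (apply sqrt_sqrt; nra).
  assert (HS0 : Sy <= S0) by (apply sqrt_le_1_alt; nra).
  assert (HS0A : S0 <= A).
  { unfold S0. apply Rle_trans with (sqrt (A ^ 2)). apply sqrt_le_1_alt; nra. rewrite sqrt_pow2; lra. }
  assert (HAS : A - Sy <= y ^ 2 / A).
  { apply (Rmult_le_reg_r (A + Sy)); [lra|].
    replace ((A - Sy) * (A + Sy)) with (A ^ 2 - Sy * Sy) by ring. rewrite HSy2.
    apply Rle_trans with (y ^ 2 / A * A). replace (y ^ 2 / A * A) with (y ^ 2) by (field; lra). lra.
    apply Rmult_le_compat_l. apply Rdiv_le_0_compat; nra. lra. }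
  unfold GF. fold A. fold y. fold t'. rewrite Edd. fold S0 Sy.
  rewrite Rabs_mult. rewrite (Rabs_pos_eq (S0 - Sy)) by lra.
  assert (Hyd : 0 < y * Derive a t') by nra.
  unfold Rdiv at 1. rewrite Rabs_mult, (Rabs_pos_eq (/ (y * Derive a t'))) by (left; apply Rinv_0_lt_compat; auto).
  (* |q| / (y da) * (S0 - Sy) <= K / (y da) * y^2 / A = K * (y / da) / A *)
  apply Rle_trans with (K * / (y * Derive a t') * (y ^ 2 / A)).
  { apply Rmult_le_compat. apply Rmult_le_pos. apply Rabs_pos. left; apply Rinv_0_lt_compat; auto. lra.
    apply Rmult_le_compat_r. left; apply Rinv_0_lt_compat; auto. auto. lra. }
  replace (K * / (y * Derive a t') * (y ^ 2 / A)) with (K * hh a t' / A) by (unfold hh; rewrite Hat'; field; lra).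
  assert (Hh := hh_mono a Ha t' tau Ht' Ht'tau).
  assert (Hhp := hh_pos a Ha t' Ht').
  replace (K / Derive a tau) with (K * hh a tau / A) by (assert (Derive a tau <> 0) by (apply Rgt_not_eq; apply da_pos; auto); assert (a tau <> 0) by (apply Rgt_not_eq; apply a_pos; auto); unfold hh, A; field; auto).
  unfold Rdiv. apply Rmult_le_compat_r. left; apply Rinv_0_lt_compat; auto.
  apply Rmult_le_compat_l; lra.
Qed.


Lemma GF_joint (x0 : R * R) p : 0 < fst x0 -> 0 < p < PI ->
  continuous (fun z : (R * R) * R => GF (fst (fst z)) (Rabs (snd (fst z))) (snd z)) (x0, p).
Proof.
  destruct x0 as [t0 s0]. simpl. intros Ht Hp. unfold GF.
  assert (Hs : 0 < sin p) by (apply sin_gt_0; lra).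
  assert (HA := a_pos a Ha t0 Ht).
  assert (Hy : 0 < a t0 * sin p) by nra.
  assert (Hty := ainv_pos a Ha _ Hy).
  assert (Hty_c : continuous (fun z : (R * R) * R => a (fst (fst z)) * sin (snd z)) ((t0, s0), p)).
  { apply cont_mult. apply (cont_fst (fun x : R * R => a (fst x))). apply (cont_fst a). apply (a_cont a Ha); auto.
    apply cont_snd. apply continuous_sin. }
  assert (Ht_c : continuous (fun z : (R * R) * R => ainv a (a (fst (fst z)) * sin (snd z))) ((t0, s0), p)).
  { apply (cont_comp1 _ (ainv a)); auto. apply (ainv_cont a Ha). simpl; auto. }
  apply cont_mult.
  - apply cont_div.
    + apply (cont_comp1 _ (Derive (Derive a))); auto. apply (dda_cont a Ha). simpl; auto.
    + apply cont_pow. apply (cont_comp1 _ (Derive a)); auto. apply (da_cont a Ha). simpl; auto.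
    + cbv beta; cbn [fst snd]. apply pow_nonzero. apply Rgt_not_eq. apply da_pos; auto.
  - apply cont_minus.
    + apply (cont_comp1 (fun z : (R*R)*R => a (fst (fst z)) ^ 2 - a (Rabs (snd (fst z))) ^ 2) sqrt).
      apply cont_minus; apply cont_pow.
      * apply (cont_fst (fun x : R * R => a (fst x))). apply (cont_fst a). apply (a_cont a Ha); auto.
      * apply (cont_fst (fun x : R * R => a (Rabs (snd x)))). apply (cont_snd (fun s => a (Rabs s))).
        apply (aext_cont a Ha).
      * apply continuous_sqrt.
    + apply (cont_comp1 (fun z : (R*R)*R => a (fst (fst z)) ^ 2 - (a (fst (fst z)) * sin (snd z)) ^ 2) sqrt).
      apply cont_minus; apply cont_pow; auto.
      * apply (cont_fst (fun x : R * R => a (fst x))). apply (cont_fst a). apply (a_cont a Ha); auto.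
      * apply continuous_sqrt.
Qed.

Lemma f_char tau u : 0 < tau -> 0 <= u < tau ->
  forall v, Phi a tau u < v <= PI/2 ->
  Rabs (f_nonneg a tau u - RInt (GF tau u) v (PI/2)) <= K / Derive a tau * (v - Phi a tau u).
Proof.
  intros Ht Hu. pose proof PI_RGT_0.
  assert (HP0 := Phi_nonneg a Ha tau Ht u ltac:(lra)).
  destruct (transfer a Ha tau Ht u Hu (gF tau u) (GF tau u) (K / Derive a tau)) as [l [Hl Hc]].
  - apply gF_id.
  - intros p Hp.
    replace (GF tau u) with (GF (fst (tau,u)) (Rabs (snd (tau,u)))) by (simpl; rewrite Rabs_pos_eq by lra; reflexivity).
    apply (cont_partial (fun t => GF (fst t) (Rabs (snd t))) (tau, u) p).
    apply (GF_joint (tau, u) p Ht ltac:(lra)).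
  - intros p Hp. apply GF_bound; auto.
  - assert (E : f_nonneg a tau u = l).
    { unfold f_nonneg. apply is_RInt_gen_unique. exact Hl. }
    rewrite E. exact Hc.
Qed.

Lemma fpos_cont (x0 : R * R) : 0 < fst x0 -> Rabs (snd x0) < fst x0 ->
  continuous (fun x : R * R => f_nonneg a (fst x) (Rabs (snd x))) x0.
Proof.
  destruct x0 as [t0 s0]. simpl. intros Ht0 Hs0. pose proof PI_RGT_0.
  assert (Hd0 := da_pos a Ha t0 Ht0).
  assert (Hd02 : 0 < Derive a t0 / 2) by lra.
  destruct (proj1 (filterlim_locally _ _) (da_cont a Ha t0 Ht0) (mkposreal _ Hd02)) as [d1 Hd1].
  set (dd := Rmin d1 ((t0 - Rabs s0) / 4)).
  assert (Hdd : 0 < dd) by (unfold dd; apply Rmin_pos; [destruct d1; auto| lra]).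
  assert (dd <= d1) by apply Rmin_l. assert (dd <= (t0 - Rabs s0) / 4) by apply Rmin_r.
  pose proof (Rabs_pos s0).
  apply (engine (X := prod_UniformSpace R_UniformSpace R_UniformSpace) (t0, s0)
    (fun x => t0 / 2 < fst x /\ Rabs (snd x) < fst x /\ Derive a t0 / 2 < Derive a (fst x))
    (fun x => Phi a (fst x) (Rabs (snd x)))
    (fun x p => GF (fst x) (Rabs (snd x)) p)
    (fun x => f_nonneg a (fst x) (Rabs (snd x)))
    (2 * K / Derive a t0)).
  - exists (mkposreal dd Hdd). intros [t s] [Hb1 Hb2]. simpl in *. rball Hb1. rball Hb2.
    apply Rabs_lt_between' in Hb1.
    assert (Hb3 : ball t0 d1 t) by (apply ballR; apply Rabs_lt_between'; lra).
    specialize (Hd1 t Hb3). rball Hd1. apply Rabs_lt_between' in Hd1.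
    pose proof (Rabs_triang_inv s s0).
    split. lra. split. lra. lra.
  - intros [t s] [N1 [N2 N3]]. simpl in *. split.
    apply Phi_nonneg; auto; try lra. split; [apply Rabs_pos| lra].
    rewrite <- (Phi_tau a Ha t) by lra. apply Phi_lt; auto; try lra. apply Rabs_pos.
  - apply (cont_comp1 (fun x : R * R => a (Rabs (snd x)) / a (fst x)) asin).
    + apply cont_div. apply (cont_snd (fun s => a (Rabs s))). apply (aext_cont a Ha).
      apply (cont_fst a). apply (a_cont a Ha); auto. simpl. apply Rgt_not_eq; apply a_pos; auto.
    + simpl. apply asin_cont. pose proof (ratio_bnd a Ha t0 Ht0 (Rabs s0) ltac:(lra)).
      pose proof (ratio_lt a Ha t0 Ht0 (Rabs s0) ltac:(lra)). lra.
  - intros p Hp. simpl in Hp.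
    assert (0 <= Phi a t0 (Rabs s0)) by (apply Phi_nonneg; auto; lra).
    pose proof (GF_joint (t0, s0) p Ht0 ltac:(lra)) as J. exact J.
  - intros [t s] p [N1 [N2 N3]] Hp. simpl in *.
    assert (0 <= Phi a t (Rabs s)) by (apply Phi_nonneg; auto; try lra; split; [apply Rabs_pos| lra]).
    apply (cont_partial (fun x p => GF (fst x) (Rabs (snd x)) p) (t, s) p).
    apply GF_joint; simpl; lra.
  - intros [t s] v [N1 [N2 N3]] Hv. simpl in *.
    eapply Rle_trans. apply f_char; auto; try lra. split; [apply Rabs_pos| lra].
    apply Rmult_le_compat_r. lra.
    assert (Hdt : 0 < Derive a t) by lra.
    unfold Rdiv. rewrite Rmult_assoc. apply Rle_trans with (K * (2 * / Derive a t0)).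
    apply Rmult_le_compat_l. lra.
    apply Rle_trans with (/ (Derive a t0 / 2)). apply Rinv_le_contravar; lra.
    right. field. lra. right; ring.
Qed.

End FF.

Lemma tri3 (eps x1 x2 y1 y2 : R) : Rabs (x1 - x2) < eps / 3 -> Rabs (y1 - y2) < eps / 3 ->
  Rabs (2 * x1 - y1 - (2 * x2 - y2)) < eps.
Proof.
  intros H1 H2. replace (2 * x1 - y1 - (2 * x2 - y2)) with (2 * (x1 - x2) - (y1 - y2)) by ring.
  eapply Rle_lt_trans; [apply Rabs_triang|]. rewrite Rabs_Ropp, Rabs_mult, (Rabs_pos_eq 2) by lra. lra.
Qed.

Lemma tri3' (eps x1 x2 y1 : R) : Rabs (x1 - x2) < eps / 3 -> Rabs (y1 - x2) < eps / 3 ->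
  Rabs (2 * x1 - y1 - x2) < eps.
Proof.
  intros H1 H2. replace (2 * x1 - y1 - x2) with (2 * (x1 - x2) - (y1 - x2)) by ring.
  eapply Rle_lt_trans; [apply Rabs_triang|]. rewrite Rabs_Ropp, Rabs_mult, (Rabs_pos_eq 2) by lra. lra.
Qed.

Lemma ffun_cont a (Ha : strongly_regular_scale_factor a) K (HK1 : 1 <= K)
  (HK : forall t, 0 < t -> - K <= a t * Derive (Derive a) t / (Derive a t) ^ 2)
  (x0 : R * R) : 0 < fst x0 -> Rabs (snd x0) < fst x0 ->
  continuous (fun x : R * R => f_fun a (fst x) (snd x)) x0.
Proof.
  destruct x0 as [t0 s0]. simpl. intros Ht0 Hs0.
  set (P := fun x : R * R => f_nonneg a (fst x) (Rabs (snd x))).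
  set (P0 := fun x : R * R => f_nonneg a (fst x) 0).
  assert (CP : continuous P (t0, s0)) by (apply (fpos_cont a Ha K HK1 HK); simpl; auto).
  assert (CP0 : continuous P0 (t0, s0)).
  { assert (E : P0 = fun x => P (fst x, 0)).
    { unfold P0, P. apply functional_extensionality. intros x. simpl. rewrite Rabs_R0. reflexivity. }
    rewrite E. apply (continuous_comp (fun x : R * R => (fst x, 0)) P).
    - apply (continuous_comp_2 fst (fun _ => 0) pair). apply continuous_fst. apply continuous_const.
      intros Q [e He]. exists e. intros y Hy. apply He. exact Hy.
    - simpl. apply (fpos_cont a Ha K HK1 HK); simpl; auto. rewrite Rabs_R0; lra. }
  assert (EQp : forall t s, 0 <= s -> f_fun a t s = P (t, s)).
  { intros t s Hs. unfold f_fun, P. simpl. destruct (Rle_dec 0 s); [|lra]. rewrite Rabs_pos_eq; auto. }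
  assert (EQn : forall t s, s < 0 -> f_fun a t s = 2 * P0 (t, s) - P (t, s)).
  { intros t s Hs. unfold f_fun, P, P0. simpl. destruct (Rle_dec 0 s); [lra|]. rewrite Rabs_left; auto. }
  apply filterlim_locally. intros [eps He]. simpl.
  assert (He3 : 0 < eps / 3) by lra.
  assert (L1 := proj1 (filterlim_locally _ _) CP (mkposreal _ He3)).
  assert (L2 := proj1 (filterlim_locally _ _) CP0 (mkposreal _ He3)).
  destruct (Rtotal_order s0 0) as [Hn|[Hz|Hp]].
  - assert (Hd : 0 < - s0) by lra.
    assert (L3 : locally (t0, s0) (fun x : R * R => snd x < 0)).
    { exists (mkposreal _ Hd). intros [t s] [_ Hb]. simpl in *. rball Hb. apply Rabs_lt_between' in Hb. lra. }
    generalize (filter_and _ _ L1 (filter_and _ _ L2 L3)). apply filter_imp.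
    intros [t s] [B1 [B2 B3]]. simpl in B3. rball B1. rball B2.
    apply ballR. cbn [fst snd]. rewrite EQn by auto. rewrite EQn by auto.
    apply tri3; assumption.
  - subst s0.
    generalize (filter_and _ _ L1 L2). apply filter_imp.
    intros [t s] [B1 B2]. rball B1. rball B2.
    apply ballR. cbn [fst snd]. rewrite (EQp t0 0) by lra.
    assert (E0 : P (t0, 0) = P0 (t0, 0)) by (unfold P, P0; simpl; rewrite Rabs_R0; auto).
    destruct (Rle_lt_dec 0 s).
    + rewrite EQp by auto. apply Rlt_trans with (eps/3); [exact B1|lra].
    + rewrite EQn by auto. rewrite E0 in B1 |- *.
      apply tri3'; assumption.
  - assert (L3 : locally (t0, s0) (fun x : R * R => 0 < snd x)).
    { exists (mkposreal _ Hp). intros [t s] [_ Hb]. simpl in *. rball Hb. apply Rabs_lt_between' in Hb. lra. }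
    generalize (filter_and _ _ L1 L3). apply filter_imp.
    intros [t s] [B1 B3]. simpl in B3. rball B1.
    apply ballR. cbn [fst snd]. rewrite EQp by lra. rewrite EQp by lra. apply Rlt_trans with (eps/3); [exact B1|lra].
Qed.

Theorem theorem5p4 (a : R -> R) :
  strongly_regular_scale_factor a ->
  forall p : R * R, Dom a p ->
    filterlim (fun q : R * R => g_tautau a (fst q) (snd q))
              (within (Dom a) (locally p))
              (locally (g_tautau a (fst p) (snd p))).
Proof.
  intros Ha p Hp. destruct Hp as [Ht Hr].
  destruct (a_K a Ha) as [K [HK1 HK]].
  destruct (t0_cont a Ha p Ht Hr) as [Hts Htc].
  apply (filterlim_filter_le_1 _ (filter_le_within _)).
  set (T0 := fun q : R * R => t0_of a (fst q) (snd q)).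
  set (h := fun q : R * R => (fst q, T0 q)).
  assert (Ch : continuous h p).
  { unfold h. apply (continuous_comp_2 fst T0 pair).
    - destruct p; apply continuous_fst.
    - apply filterlim_locally. intros [e He]. simpl.
      generalize (Htc e He). apply filter_imp. intros q Hq. apply ballR. exact Hq.
    - intros Q [e He]. exists e. intros y Hy. apply He. exact Hy. }
  set (Fm := fun y : R * R => - (1 - Derive a (fst y) * f_fun a (fst y) (snd y)) ^ 2).
  assert (CF : continuous Fm (h p)).
  { unfold Fm. apply cont_opp. apply cont_pow. apply cont_minus. apply cont_const.
    apply cont_mult.
    - unfold h. destruct p as [t0 r0]. simpl in *. apply (cont_fst (Derive a)). apply (da_cont a Ha); auto.
    - apply (ffun_cont a Ha K HK1 HK). unfold h; simpl; auto.
      unfold h, T0; simpl. apply Rabs_def1; lra. }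
  apply (continuous_comp h Fm p Ch CF).
Qed.
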